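(* For $d\in\{3,4\}$, no graph of the form $K_d\star G_6$ (with $G_6$ any graph on $6$ vertices) is $d$-ball packable, except $K_3\star C_6$ (for $d=3$). For $d\ge 5$, no graph of the form $K_d\star G_5$ (with $G_5$ any graph on $5$ vertices) is $d$-ball packable.
   Context: $K_n$ is the complete graph on $n$ vertices, $C_n$ the cycle on $n$ vertices, $G_n$ denotes an arbitrary graph on $n$ vertices. $G\star H$ is the join (disjoint union plus all edges between $G$ and $H$). A $d$-ball in $\hat{\mathbb R}^d$ is a closed ball, closed exterior of an open ball with $\infty$, or a closed half-space with $\infty$; a $d$-ball packing is a collection of $d$-balls with disjoint interiors; its tangency graph joins balls meeting in exactly one point; a graph is $d$-ball packable if isomorphic to the tangency graph of some $d$-ball packing. *)

(* Defs.v *)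
From Stdlib Require Import Reals Arith.
Open Scope R_scope.

(* Vectors: functions nat -> R; a point of R^d is a vector vanishing at all
   coordinates >= d (so equality of points is equality of functions). *)
Definition vec := nat -> R.
Definition inRd (d : nat) (x : vec) : Prop := forall i, (d <= i)%nat -> x i = 0.

Fixpoint dot (d : nat) (x y : vec) : R :=
  match d with
  | O => 0
  | S k => dot k x y + x k * y k
  end.

Definition dist2 (d : nat) (x y : vec) : R :=
  dot d (fun i => x i - y i) (fun i => x i - y i).

(* Points of the one-point compactification \hat R^d: None is infinity. *)
Definition ept := option vec.

Inductive dball : Type :=
  | CBall (c : vec) (r : R)
  | CExt  (c : vec) (r : R)   (* closed exterior { |x-c| >= r } together with infinity *)
  | HSpace (a : vec) (b : R). (* closed half-space { a.x <= b } together with infinity *)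

Definition valid_ball (d : nat) (B : dball) : Prop :=
  match B with
  | CBall c r => inRd d c /\ 0 < r
  | CExt c r => inRd d c /\ 0 < r
  | HSpace a b => inRd d a /\ exists i, (i < d)%nat /\ a i <> 0
  end.

Definition mem (d : nat) (B : dball) (p : ept) : Prop :=
  match p with
  | None => match B with CBall _ _ => False | _ => True end
  | Some x => inRd d x /\
      match B with
      | CBall c r => dist2 d x c <= r ^ 2
      | CExt c r => r ^ 2 <= dist2 d x c
      | HSpace a b => dot d a x <= b
      end
  end.

(* Topological interior in \hat R^d (neighbourhoods of infinity are
   complements of bounded sets, plus infinity). *)
Definition interior (d : nat) (S : ept -> Prop) (p : ept) : Prop :=
  S p /\
  match p with
  | Some x => exists eps, 0 < eps /\
      forall y, inRd d y -> dist2 d x y < eps ^ 2 -> S (Some y)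
  | None => exists M, forall y, inRd d y -> M ^ 2 < dot d y y -> S (Some y)
  end.

Definition ball_packing (d n : nat) (B : nat -> dball) : Prop :=
  (forall i, (i < n)%nat -> valid_ball d (B i)) /\
  (forall i j, (i < n)%nat -> (j < n)%nat -> i <> j ->
     ~ (exists p, interior d (mem d (B i)) p /\ interior d (mem d (B j)) p)).

Definition tangent (d : nat) (B1 B2 : dball) : Prop :=
  exists p, mem d B1 p /\ mem d B2 p /\
    forall q, mem d B1 q -> mem d B2 q -> q = p.

Definition simple_graph (n : nat) (G : nat -> nat -> Prop) : Prop :=
  forall i j, (i < n)%nat -> (j < n)%nat -> G i j -> G j i /\ i <> j.

Definition ball_packable (d n : nat) (G : nat -> nat -> Prop) : Prop :=
  exists B : nat -> dball, ball_packing d n B /\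
    forall i j, (i < n)%nat -> (j < n)%nat -> i <> j ->
      (G i j <-> tangent d (B i) (B j)).

(* K_k * G : vertices 0..k-1 form K_k, vertices k..k+m-1 carry G (shifted). *)
Definition join_K (k : nat) (G : nat -> nat -> Prop) : nat -> nat -> Prop :=
  fun i j => (i < k)%nat \/ (j < k)%nat \/ G (i - k)%nat (j - k)%nat.

Definition C6 : nat -> nat -> Prop :=
  fun i j => j = ((i + 1) mod 6)%nat \/ i = ((j + 1) mod 6)%nat.

Definition graph_iso (m : nat) (G H : nat -> nat -> Prop) : Prop :=
  exists f : nat -> nat,
    (forall i, (i < m)%nat -> (f i < m)%nat) /\
    (forall i j, (i < m)%nat -> (j < m)%nat -> f i = f j -> i = j) /\
    (forall i j, (i < m)%nat -> (j < m)%nat -> (G i j <-> H (f i) (f j))).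

(* Main.v *)
Require Import Defs.
From Stdlib Require Import Reals Arith Lra Lia Psatz FunctionalExtensionality Classical.
Require Import Defs.
Open Scope R_scope.

Fixpoint sumR (n : nat) (f : nat -> R) : R :=
  match n with O => 0 | S k => sumR k f + f k end.

Lemma sumR_ext n f g : (forall i, (i < n)%nat -> f i = g i) -> sumR n f = sumR n g.
Proof. induction n; simpl; intros H; auto. rewrite IHn by (intros; apply H; lia). rewrite H by lia. auto. Qed.

Lemma sumR_plus n f g : sumR n (fun i => f i + g i) = sumR n f + sumR n g.
Proof. induction n; simpl; [lra|]. rewrite IHn; lra. Qed.

Lemma sumR_scal n a f : sumR n (fun i => a * f i) = a * sumR n f.
Proof. induction n; simpl; [lra|]. rewrite IHn; lra. Qed.

Lemma sumR_zero n f : (forall i, (i < n)%nat -> f i = 0) -> sumR n f = 0.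
Proof. induction n; simpl; intros H; auto. rewrite IHn by (intros; apply H; lia). rewrite H by lia. lra. Qed.

Lemma sumR_le n f g : (forall i, (i < n)%nat -> f i <= g i) -> sumR n f <= sumR n g.
Proof. induction n; simpl; intros H; [lra|]. specialize (IHn (fun i Hi => H i ltac:(lia))). specialize (H n ltac:(lia)). lra. Qed.

Lemma sumR_sq n g : sumR n (fun i => sumR n (fun j => g i * g j)) = sumR n g * sumR n g.
Proof.
  transitivity (sumR n (fun i => g i * sumR n g)).
  - apply sumR_ext; intros; apply sumR_scal.
  - rewrite <- (sumR_scal n (sumR n g) g). apply sumR_ext; intros; lra.
Qed.

Lemma sumR_le_one n g i : (i < n)%nat -> (forall j, (j < n)%nat -> j <> i -> g j <= 0) -> sumR n g <= g i.
Proof.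
  induction n; intros Hi H; [lia|]. simpl.
  destruct (Nat.eq_dec i n) as [->|Hne].
  - assert (sumR n g <= 0). { replace 0 with (sumR n (fun _ => 0)) by (apply sumR_zero; auto).
      apply sumR_le; intros; apply H; lia. } lra.
  - assert (g n <= 0) by (apply H; lia). assert (sumR n g <= g i) by (apply IHn; [lia| intros; apply H; lia]). lra.
Qed.

Lemma sumR_le_two n g i j : (i < n)%nat -> (j < n)%nat -> i <> j ->
  (forall k, (k < n)%nat -> k <> i -> k <> j -> g k <= 0) -> sumR n g <= g i + g j.
Proof.
  induction n; intros Hi Hj Hij H; [lia|]. simpl.
  destruct (Nat.eq_dec i n) as [->|Hne].
  - assert (sumR n g <= g j) by (apply sumR_le_one; [lia| intros; apply H; lia]). lra.
  - destruct (Nat.eq_dec j n) as [->|Hne2].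
    + assert (sumR n g <= g i) by (apply sumR_le_one; [lia| intros; apply H; lia]). lra.
    + assert (g n <= 0) by (apply H; lia). assert (sumR n g <= g i + g j) by (apply IHn; try lia; intros; apply H; lia). lra.
Qed.

Lemma dot_ext d u v u' v' : (forall i, (i < d)%nat -> u i = u' i) -> (forall i, (i < d)%nat -> v i = v' i) ->
  dot d u v = dot d u' v'.
Proof. induction d; simpl; intros H1 H2; auto. rewrite IHd by (intros; auto). rewrite H1, H2 by lia; auto. Qed.

Lemma dot_sym d u v : dot d u v = dot d v u.
Proof. induction d; simpl; auto. rewrite IHd; ring. Qed.

Lemma dot_lin d a b u w v : dot d (fun i => a * u i + b * w i) v = a * dot d u v + b * dot d w v.
Proof. induction d; simpl; [ring|]. rewrite IHd; ring. Qed.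

Lemma dot_lin_r d a b u w v : dot d v (fun i => a * u i + b * w i) = a * dot d v u + b * dot d v w.
Proof. rewrite dot_sym, dot_lin, !(dot_sym d v); auto. Qed.

Lemma dot_sub d u w v : dot d (fun i => u i - w i) v = dot d u v - dot d w v.
Proof. rewrite (dot_ext d _ v (fun i => 1 * u i + (-1) * w i) v) by (intros; ring). rewrite dot_lin; ring. Qed.

Lemma dot_sub_r d u w v : dot d v (fun i => u i - w i) = dot d v u - dot d v w.
Proof. rewrite dot_sym, dot_sub, !(dot_sym d v); auto. Qed.

Lemma dot_scal d a u v : dot d (fun i => a * u i) v = a * dot d u v.
Proof. induction d; simpl; [ring|]. rewrite IHd; ring. Qed.

Lemma dot_scal_r d a u v : dot d v (fun i => a * u i) = a * dot d v u.
Proof. rewrite dot_sym, dot_scal, dot_sym; auto. Qed.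

Lemma dot_add d u w v : dot d (fun i => u i + w i) v = dot d u v + dot d w v.
Proof. induction d; simpl; [ring|]. rewrite IHd; ring. Qed.

Lemma dot_add_r d u w v : dot d v (fun i => u i + w i) = dot d v u + dot d v w.
Proof. rewrite dot_sym, dot_add, !(dot_sym d v); auto. Qed.

Lemma dot_pos d u : 0 <= dot d u u.
Proof. induction d; simpl; nra. Qed.

Lemma dot_zero d u : dot d u u = 0 -> forall i, (i < d)%nat -> u i = 0.
Proof.
  induction d; simpl; intros H i Hi; [lia|].
  pose proof (dot_pos d u). assert (u d * u d = 0) by nra. assert (dot d u u = 0) by nra.
  destruct (Nat.eq_dec i d) as [->|]; [nra|]. apply IHd; auto; lia.
Qed.

Lemma dot_pos_nz d u i : (i < d)%nat -> u i <> 0 -> 0 < dot d u u.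
Proof. intros Hi Hu. pose proof (dot_pos d u). destruct (Rle_lt_or_eq_dec _ _ H); auto.
  exfalso; apply Hu; apply (dot_zero d u); auto. Qed.

Lemma CS d u v : dot d u v * dot d u v <= dot d u u * dot d v v.
Proof.
  destruct (Req_dec (dot d v v) 0) as [H0|H0].
  - assert (forall i, (i < d)%nat -> v i = 0) by (apply dot_zero; auto).
    rewrite (dot_ext d u v u (fun _ => 0)) by auto.
    replace (dot d u (fun _ => 0)) with 0. nra.
    clear; induction d; simpl; auto; rewrite <- IHd; ring.
  - pose proof (dot_pos d v).
    set (t := dot d u v / dot d v v).
    pose proof (dot_pos d (fun i => 1 * u i + (- t) * v i)).
    rewrite dot_lin, !dot_lin_r in H1.
    rewrite (dot_sym d v u) in H1.
    unfold t in H1. field_simplify in H1; [|lra].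
    assert (0 < dot d v v) by lra.
    apply Rmult_le_reg_r with (/ dot d v v). apply Rinv_0_lt_compat; lra.
    assert (0 <= (dot d u u * dot d v v - dot d u v ^ 2) / dot d v v).
    { unfold Rdiv. apply Rmult_le_pos; [|left; apply Rinv_0_lt_compat; lra].
      apply Rmult_le_reg_r with (/ dot d v v); [apply Rinv_0_lt_compat; lra|].
      rewrite Rmult_0_l. replace ((dot d u u * dot d v v - dot d u v ^ 2) * / dot d v v) with ((dot d u u * dot d v v - dot d u v ^ 2)/ dot d v v) by auto. nra. }
    unfold Rdiv in H3. nra.
Qed.

Definition nrm d u := sqrt (dot d u u).

Lemma nrm_sq d u : nrm d u * nrm d u = dot d u u.
Proof. unfold nrm. apply sqrt_sqrt, dot_pos. Qed.
Lemma nrm_pos d u : 0 <= nrm d u.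
Proof. apply sqrt_pos. Qed.

Lemma dot_le_nrm d u v : dot d u v <= nrm d u * nrm d v.
Proof.
  pose proof (CS d u v). rewrite <- (nrm_sq d u), <- (nrm_sq d v) in H.
  pose proof (nrm_pos d u). pose proof (nrm_pos d v).
  destruct (Rle_or_lt (dot d u v) (nrm d u * nrm d v)); auto.
  assert (0 <= nrm d u * nrm d v) by nra. nra.
Qed.

Lemma abs_dot_le_nrm d u v : Rabs (dot d u v) <= nrm d u * nrm d v.
Proof.
  apply Rabs_le; split; [|apply dot_le_nrm].
  pose proof (dot_le_nrm d (fun i => -1 * u i) v). rewrite dot_scal in H.
  replace (nrm d (fun i => -1 * u i)) with (nrm d u) in H. lra.
  unfold nrm. f_equal. rewrite dot_scal, dot_scal_r. ring.
Qed.

Lemma dist2_sym d x y : dist2 d x y = dist2 d y x.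
Proof. unfold dist2. rewrite (dot_ext d (fun i => y i - x i) (fun i => y i - x i) (fun i => -1 * (x i - y i)) (fun i => -1 * (x i - y i))) by (intros; ring).
  rewrite dot_scal, dot_scal_r. ring. Qed.

Lemma dist2_expand d x y : dist2 d x y = dot d x x - 2 * dot d x y + dot d y y.
Proof. unfold dist2. rewrite dot_sub, !dot_sub_r. rewrite (dot_sym d y x). ring. Qed.

Lemma dist2_pos d x y : 0 <= dist2 d x y.
Proof. apply dot_pos. Qed.

Lemma sqrt_le_sum a b c : 0 <= a -> 0 <= b -> 0 <= c -> c <= (sqrt a + sqrt b) ^ 2 -> sqrt c <= sqrt a + sqrt b.
Proof.
  intros Ha Hb Hc H. rewrite <- (sqrt_pow2 (sqrt a + sqrt b)).
  apply sqrt_le_1_alt; auto. pose proof (sqrt_pos a); pose proof (sqrt_pos b); lra.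
Qed.

Lemma tri d x y z : sqrt (dist2 d x z) <= sqrt (dist2 d x y) + sqrt (dist2 d y z).
Proof.
  apply sqrt_le_sum; try apply dist2_pos.
  set (a := fun i => x i - y i). set (b := fun i => y i - z i).
  assert (E : dist2 d x z = dot d a a + 2 * dot d a b + dot d b b).
  { unfold dist2. rewrite (dot_ext d _ _ (fun i => a i + b i) (fun i => a i + b i)) by (intros; unfold a, b; ring).
    rewrite dot_add, !dot_add_r, (dot_sym d b a). ring. }
  rewrite E. fold (nrm d a) (nrm d b) in *. unfold dist2. fold a b. fold (nrm d a) (nrm d b).
  pose proof (dot_le_nrm d a b). rewrite <- (nrm_sq d a), <- (nrm_sq d b). nra.
Qed.

Lemma dist2_zero_eq d x y : inRd d x -> inRd d y -> dist2 d x y = 0 -> x = y.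
Proof.
  intros Hx Hy H. apply functional_extensionality; intros i.
  destruct (lt_dec i d).
  - pose proof (dot_zero d _ H i l). simpl in H0. lra.
  - rewrite Hx, Hy by lia; auto.
Qed.

Definition vaxpy (x : vec) (t : R) (u : vec) : vec := fun i => x i + t * u i.

Lemma inRd_axpy d x t u : inRd d x -> inRd d u -> inRd d (vaxpy x t u).
Proof. unfold inRd, vaxpy; intros Hx Hu i Hi; rewrite Hx, Hu by auto; ring. Qed.

Lemma inRd_sub d x y : inRd d x -> inRd d y -> inRd d (fun i => x i - y i).
Proof. unfold inRd; intros Hx Hu i Hi; rewrite Hx, Hu by auto; ring. Qed.

Lemma dist2_axpy d x t u y : dist2 d (vaxpy x t u) y = dist2 d x y + 2 * t * dot d (fun i => x i - y i) u + t * t * dot d u u.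
Proof.
  unfold dist2, vaxpy.
  rewrite (dot_ext d _ _ (fun i => 1 * (x i - y i) + t * u i) (fun i => 1 * (x i - y i) + t * u i)) by (intros; ring).
  rewrite dot_lin, !dot_lin_r. rewrite (dot_sym d u). ring.
Qed.

Lemma dist2_axpy_self d x t u : dist2 d x (vaxpy x t u) = t * t * dot d u u.
Proof.
  unfold dist2, vaxpy.
  rewrite (dot_ext d _ _ (fun i => (-t) * u i) (fun i => (-t) * u i)) by (intros; ring).
  rewrite dot_scal, dot_scal_r. ring.
Qed.

Lemma dot_axpy d x t u v : dot d (vaxpy x t u) v = dot d x v + t * dot d u v.
Proof. unfold vaxpy. rewrite (dot_ext d _ v (fun i => 1 * x i + t * u i) v) by (intros; ring). rewrite dot_lin; ring. Qed.

Lemma sqrt_lt_of a e : 0 <= a -> 0 <= e -> a < e * e -> sqrt a < e.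
Proof. intros. pose proof (sqrt_sqrt a H). pose proof (sqrt_pos a). nra. Qed.
Lemma lt_of_sqrt a e : 0 <= a -> sqrt a < e -> a < e * e.
Proof. intros. pose proof (sqrt_sqrt a H). pose proof (sqrt_pos a). nra. Qed.
Lemma gt_of_sqrt a e : 0 <= a -> 0 <= e -> e < sqrt a -> e * e < a.
Proof. intros. pose proof (sqrt_sqrt a H). pose proof (sqrt_pos a). nra. Qed.
Lemma sqrt_gt_of a e : 0 <= a -> 0 <= e -> e * e < a -> e < sqrt a.
Proof. intros. pose proof (sqrt_sqrt a H). pose proof (sqrt_pos a). nra. Qed.

Definition zv : vec := fun _ => 0.

Lemma int_ball_suff d c r x : 0 < r -> inRd d x -> dist2 d x c < r ^ 2 ->
  interior d (mem d (CBall c r)) (Some x).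
Proof.
  intros Hr Hx H. split; [simpl; split; auto; lra|].
  pose proof (dist2_pos d x c).
  assert (Hs : sqrt (dist2 d x c) < r) by (apply sqrt_lt_of; nra).
  exists (r - sqrt (dist2 d x c)). split; [lra|]. intros y Hy Hxy. simpl. split; auto.
  pose proof (tri d y x c). rewrite (dist2_sym d y x) in H1.
  assert (sqrt (dist2 d x y) < r - sqrt (dist2 d x c)) by (apply sqrt_lt_of; try apply dist2_pos; nra).
  assert (dist2 d y c < r * r) by (apply lt_of_sqrt; [apply dist2_pos| lra]). nra.
Qed.

Lemma int_ext_suff d c r x : 0 < r -> inRd d x -> r ^ 2 < dist2 d x c ->
  interior d (mem d (CExt c r)) (Some x).
Proof.
  intros Hr Hx H. split; [simpl; split; auto; lra|].
  pose proof (dist2_pos d x c).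
  assert (Hs : r < sqrt (dist2 d x c)) by (apply sqrt_gt_of; nra).
  exists (sqrt (dist2 d x c) - r). split; [lra|]. intros y Hy Hxy. simpl. split; auto.
  pose proof (tri d x y c).
  assert (sqrt (dist2 d x y) < sqrt (dist2 d x c) - r) by (apply sqrt_lt_of; try apply dist2_pos; nra).
  assert (r * r < dist2 d y c) by (apply gt_of_sqrt; [apply dist2_pos| lra| lra]). nra.
Qed.

Lemma int_hs_suff d a b x : 0 < dot d a a -> inRd d x -> dot d a x < b ->
  interior d (mem d (HSpace a b)) (Some x).
Proof.
  intros Ha Hx H. split; [simpl; split; auto; lra|].
  assert (Hn : 0 < nrm d a). { unfold nrm. apply sqrt_lt_R0; auto. }
  exists ((b - dot d a x) / nrm d a). split. { apply Rdiv_lt_0_compat; lra. }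
  intros y Hy Hxy. simpl. split; auto.
  pose proof (dot_le_nrm d a (fun i => y i - x i)). rewrite dot_sub_r in H0.
  assert (nrm d (fun i => y i - x i) < (b - dot d a x) / nrm d a).
  { change (sqrt (dot d (fun i => y i - x i) (fun i => y i - x i)) < (b - dot d a x) / nrm d a). apply sqrt_lt_of. apply dot_pos. left; apply Rdiv_lt_0_compat; lra.
    rewrite dist2_sym in Hxy. unfold dist2 in Hxy. simpl in Hxy. rewrite Rmult_1_r in Hxy. exact Hxy. }
  assert (nrm d a * nrm d (fun i => y i - x i) < nrm d a * ((b - dot d a x) / nrm d a)) by (apply Rmult_lt_compat_l; auto).
  replace (nrm d a * ((b - dot d a x) / nrm d a)) with (b - dot d a x) in H2 by (field; lra). lra.
Qed.

Lemma int_ext_inf d c r : 0 < r -> interior d (mem d (CExt c r)) None.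
Proof.
  intros Hr. split; [simpl; auto|]. exists (sqrt (dot d c c) + r). intros y Hy HM. simpl. split; auto.
  pose proof (tri d y c zv).
  assert (E1 : dist2 d y zv = dot d y y) by (unfold dist2, zv; apply dot_ext; intros; ring).
  assert (E2 : dist2 d c zv = dot d c c) by (unfold dist2, zv; apply dot_ext; intros; ring).
  rewrite E1, E2 in H.
  pose proof (sqrt_pos (dot d c c)).
  assert (sqrt (dot d c c) + r < sqrt (dot d y y)) by (apply sqrt_gt_of; [apply dot_pos|lra|nra]).
  assert (r * r < dist2 d y c) by (apply gt_of_sqrt; [apply dist2_pos|lra|lra]). nra.
Qed.

Lemma int_ball_nec d c r x : 0 < r -> inRd d c -> interior d (mem d (CBall c r)) (Some x) -> dist2 d x c < r ^ 2.
Proof.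
  intros Hr Hc [[Hx Hm] [eps [He Hy]]].
  destruct (Rle_lt_or_eq_dec _ _ Hm) as [|Heq]; auto. exfalso.
  set (u := fun i => x i - c i). set (t := eps / (2 * r)).
  assert (Ht : 0 < t) by (unfold t; apply Rdiv_lt_0_compat; lra).
  assert (Hu : dot d u u = r ^ 2) by exact Heq.
  specialize (Hy (vaxpy x t u) (inRd_axpy d x t u Hx (inRd_sub d x c Hx Hc))).
  rewrite dist2_axpy_self, Hu in Hy.
  assert (t * t * r ^ 2 < eps ^ 2). { unfold t. replace (eps / (2 * r) * (eps / (2 * r)) * r ^ 2) with (eps^2 / 4) by (field; lra). nra. }
  specialize (Hy H). simpl in Hy. destruct Hy as [_ Hy].
  rewrite dist2_axpy in Hy. fold u in Hy. rewrite Hu in Hy. unfold dist2 in Hy. fold u in Hy. rewrite Hu in Hy. assert (0 < t * (r*r)) by (apply Rmult_lt_0_compat; nra). assert (0 <= t*t*(r*r)) by (apply Rmult_le_pos; nra). simpl in Hy. nra.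
Qed.

Lemma int_ext_nec d c r x : 0 < r -> inRd d c -> interior d (mem d (CExt c r)) (Some x) -> r ^ 2 < dist2 d x c.
Proof.
  intros Hr Hc [[Hx Hm] [eps [He Hy]]].
  destruct (Rle_lt_or_eq_dec _ _ Hm) as [|Heq]; auto. exfalso.
  set (u := fun i => x i - c i). set (s := eps / (r + eps)).
  assert (Hs : 0 < s) by (unfold s; apply Rdiv_lt_0_compat; lra).
  assert (Hs1 : s < 1) by (unfold s; apply (Rmult_lt_reg_r (r + eps)); [lra|]; field_simplify; lra).
  assert (Hu : dot d u u = r ^ 2) by (symmetry; exact Heq).
  specialize (Hy (vaxpy x (-s) u) (inRd_axpy d x (-s) u Hx (inRd_sub d x c Hx Hc))).
  rewrite dist2_axpy_self, Hu in Hy.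
  assert (s * r < eps) by (unfold s; apply (Rmult_lt_reg_r (r + eps)); [lra|]; field_simplify; nra).
  assert (- s * - s * r ^ 2 < eps ^ 2). { assert (0 < s*r) by nra. replace (- s * - s * r ^ 2) with ((s*r)*(s*r)) by ring. simpl. nra. }
  specialize (Hy H0). simpl in Hy. destruct Hy as [_ Hy].
  rewrite dist2_axpy in Hy. fold u in Hy. rewrite Hu in Hy. unfold dist2 in Hy. fold u in Hy. rewrite Hu in Hy. assert (0 < s * (r*r)) by (apply Rmult_lt_0_compat; nra). assert (0 <= s*s*(r*r)) by (apply Rmult_le_pos; nra). simpl in Hy. nra.
Qed.

Lemma int_hs_nec d a b x : 0 < dot d a a -> inRd d a -> interior d (mem d (HSpace a b)) (Some x) -> dot d a x < b.
Proof.
  intros Ha Hai [[Hx Hm] [eps [He Hy]]].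
  destruct (Rle_lt_or_eq_dec _ _ Hm) as [|Heq]; auto. exfalso.
  assert (Hn : 0 < nrm d a) by (unfold nrm; apply sqrt_lt_R0; auto).
  pose proof (nrm_sq d a).
  set (t := eps / (2 * nrm d a)).
  assert (Ht : 0 < t) by (unfold t; apply Rdiv_lt_0_compat; lra).
  specialize (Hy (vaxpy x t a) (inRd_axpy d x t a Hx Hai)).
  rewrite dist2_axpy_self in Hy.
  assert (t * t * dot d a a < eps ^ 2). { rewrite <- H. unfold t. replace (eps / (2 * nrm d a) * (eps / (2 * nrm d a)) * (nrm d a * nrm d a)) with (eps^2 / 4) by (field; lra). nra. }
  specialize (Hy H0). simpl in Hy. destruct Hy as [_ Hy].
  rewrite (dot_sym d a (vaxpy x t a)), dot_axpy, (dot_sym d x a) in Hy. nra.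
Qed.

Lemma int_hs_inf d a b : 0 < dot d a a -> inRd d a -> ~ interior d (mem d (HSpace a b)) None.
Proof.
  intros Ha Hai [_ [M HM]].
  set (A := dot d a a) in *. set (K := Rabs M + Rabs b + 1). set (t := K * (1 + / A)).
  assert (inRd d (vaxpy zv t a)) by (apply inRd_axpy; auto; intros i _; reflexivity).
  assert (E1 : dot d (vaxpy zv t a) (vaxpy zv t a) = t * t * A).
  { unfold vaxpy, zv. rewrite (dot_ext d _ _ (fun i => t * a i) (fun i => t * a i)) by (intros; ring).
    rewrite dot_scal, dot_scal_r. unfold A; ring. }
  assert (E2 : dot d a (vaxpy zv t a) = t * A).
  { unfold vaxpy, zv. rewrite (dot_ext d _ _ a (fun i => t * a i)) by (intros; ring).
    rewrite dot_scal_r. unfold A; ring. }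
  assert (HK : 1 <= K) by (unfold K; pose proof (Rabs_pos M); pose proof (Rabs_pos b); lra).
  assert (E3 : t * A = K * (A + 1)) by (unfold t; field; lra).
  assert (E4 : t * t * A = K * K * (A + 2 + / A)) by (unfold t; field; lra).
  pose proof (Rinv_0_lt_compat A Ha).
  assert (M ^ 2 < dot d (vaxpy zv t a) (vaxpy zv t a)).
  { rewrite E1, E4. pose proof (Rabs_pos M). pose proof (RPow_abs M 2).
    replace (M ^ 2) with (Rabs M * Rabs M) by (rewrite <- Rabs_mult; rewrite Rabs_pos_eq; [ring| nra]).
    assert (Rabs M < K) by (unfold K; pose proof (Rabs_pos b); lra). nra. }
  specialize (HM _ H H1). simpl in HM. destruct HM as [_ HM]. rewrite E2, E3 in HM.
  pose proof (Rle_abs b). unfold K in HM. pose proof (Rabs_pos M). pose proof (Rabs_pos b). assert (0 <= (Rabs M + Rabs b + 1) * A) by (apply Rmult_le_pos; lra). nra.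
Qed.

Lemma sqrt_le_of a e : 0 <= a -> 0 <= e -> a <= e * e -> sqrt a <= e.
Proof. intros. pose proof (sqrt_sqrt a H). pose proof (sqrt_pos a). nra. Qed.
Lemma le_of_sqrt a e : 0 <= a -> sqrt a <= e -> a <= e * e.
Proof. intros. pose proof (sqrt_sqrt a H). pose proof (sqrt_pos a). nra. Qed.
Lemma ge_of_sqrt a e : 0 <= a -> 0 <= e -> e <= sqrt a -> e * e <= a.
Proof. intros. pose proof (sqrt_sqrt a H). pose proof (sqrt_pos a). nra. Qed.
Lemma sqrt_ge_of a e : 0 <= a -> 0 <= e -> e * e <= a -> e <= sqrt a.
Proof. intros. pose proof (sqrt_sqrt a H). pose proof (sqrt_pos a). nra. Qed.

Lemma dist2_to_axpy d x y t u : dist2 d x (vaxpy y t u) = dist2 d x y - 2 * t * dot d (fun i => x i - y i) u + t * t * dot d u u.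
Proof.
  rewrite dist2_sym, dist2_axpy, (dist2_sym d y x).
  rewrite (dot_ext d (fun i => y i - x i) u (fun i => -1 * (x i - y i)) u) by (intros; ring).
  rewrite dot_scal. ring.
Qed.

Lemma vaxpy_sub y x : vaxpy y 1 (fun i => x i - y i) = x.
Proof. apply functional_extensionality; intros; unfold vaxpy; ring. Qed.
Lemma vaxpy_sub' y x : vaxpy y (-1) (fun i => y i - x i) = x.
Proof. apply functional_extensionality; intros; unfold vaxpy; ring. Qed.

Lemma dot_subsub d x y : dot d (fun i => x i - y i) (fun i => x i - y i) = dist2 d x y.
Proof. reflexivity. Qed.

Lemma dot_subsub' d x y : dot d (fun i => x i - y i) (fun i => y i - x i) = - dist2 d x y.
Proof. unfold dist2. rewrite (dot_ext d _ (fun i => y i - x i) (fun i => x i - y i) (fun i => -1 * (x i - y i))) by (intros; ring).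
  rewrite dot_scal_r. ring. Qed.

Definition Disjoint d B1 B2 := ~ (exists p, interior d (mem d B1) p /\ interior d (mem d B2) p).

Lemma Disjoint_sym d B1 B2 : Disjoint d B1 B2 -> Disjoint d B2 B1.
Proof. unfold Disjoint; intros H [p [H1 H2]]; apply H; eauto. Qed.

Lemma tangent_sym d B1 B2 : tangent d B1 B2 -> tangent d B2 B1.
Proof. intros [p [H1 [H2 H3]]]; exists p; repeat split; auto. Qed.

Section BB.
Variables (d : nat) (c1 c2 : vec) (r1 r2 : R).
Hypotheses (Hc1 : inRd d c1) (Hc2 : inRd d c2) (Hr1 : 0 < r1) (Hr2 : 0 < r2).

Lemma BB_pt t : dist2 d (vaxpy c1 t (fun i => c2 i - c1 i)) c1 = t * t * dist2 d c1 c2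
  /\ dist2 d (vaxpy c1 t (fun i => c2 i - c1 i)) c2 = (1 - t) * (1 - t) * dist2 d c1 c2.
Proof.
  split.
  - rewrite dist2_sym, dist2_axpy_self. rewrite (dist2_sym d c1 c2). reflexivity.
  - rewrite dist2_axpy, dot_subsub'. change (dot d (fun i => c2 i - c1 i) (fun i => c2 i - c1 i)) with (dist2 d c2 c1).
    rewrite (dist2_sym d c2 c1). ring.
Qed.

Lemma BB_disj : Disjoint d (CBall c1 r1) (CBall c2 r2) -> (r1 + r2) ^ 2 <= dist2 d c1 c2.
Proof.
  intros H. destruct (Rle_or_lt ((r1 + r2) ^ 2) (dist2 d c1 c2)) as [|Hlt]; auto. exfalso; apply H.
  set (t := r1 / (r1 + r2)). destruct (BB_pt t) as [E1 E2].
  pose proof (dist2_pos d c1 c2).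
  exists (Some (vaxpy c1 t (fun i => c2 i - c1 i))). split.
  - apply int_ball_suff; auto. apply inRd_axpy; auto; apply inRd_sub; auto.
    rewrite E1. unfold t. replace (r1 / (r1 + r2) * (r1 / (r1 + r2)) * dist2 d c1 c2) with (r1^2 * (dist2 d c1 c2 / (r1+r2)^2)) by (field; lra).
    assert (dist2 d c1 c2 / (r1+r2)^2 < 1). { apply (Rmult_lt_reg_r ((r1+r2)^2)). nra. field_simplify; nra. }
    rewrite <- (Rmult_1_r (r1^2)) at 2. apply Rmult_lt_compat_l; [apply pow_lt; lra| exact H1].
  - apply int_ball_suff; auto. apply inRd_axpy; auto; apply inRd_sub; auto.
    rewrite E2. unfold t. replace ((1 - r1 / (r1 + r2)) * (1 - r1 / (r1 + r2)) * dist2 d c1 c2) with (r2^2 * (dist2 d c1 c2 / (r1+r2)^2)) by (field; lra).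
    assert (dist2 d c1 c2 / (r1+r2)^2 < 1). { apply (Rmult_lt_reg_r ((r1+r2)^2)). nra. field_simplify; nra. }
    rewrite <- (Rmult_1_r (r2^2)) at 2. apply Rmult_lt_compat_l; [apply pow_lt; lra| exact H1].
Qed.

Lemma BB_common x : dist2 d x c1 <= r1 ^ 2 -> dist2 d x c2 <= r2 ^ 2 -> dist2 d c1 c2 <= (r1 + r2) ^ 2.
Proof.
  intros H1 H2. pose proof (tri d c1 x c2). rewrite (dist2_sym d c1 x) in H.
  assert (sqrt (dist2 d x c1) <= r1) by (apply sqrt_le_of; [apply dist2_pos|lra|nra]).
  assert (sqrt (dist2 d x c2) <= r2) by (apply sqrt_le_of; [apply dist2_pos|lra|nra]).
  assert (dist2 d c1 c2 <= (r1 + r2) * (r1 + r2)) by (apply le_of_sqrt; [apply dist2_pos|lra]). nra.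
Qed.

Lemma BB_tangent : dist2 d c1 c2 = (r1 + r2) ^ 2 -> tangent d (CBall c1 r1) (CBall c2 r2).
Proof.
  intros HD. set (t := r1 / (r1 + r2)). destruct (BB_pt t) as [E1 E2].
  assert (Hp : inRd d (vaxpy c1 t (fun i => c2 i - c1 i))) by (apply inRd_axpy; auto; apply inRd_sub; auto).
  exists (Some (vaxpy c1 t (fun i => c2 i - c1 i))). simpl. split; [|split].
  - split; auto. rewrite E1, HD. unfold t. right; field; lra.
  - split; auto. rewrite E2, HD. unfold t. right; field; lra.
  - intros [x|] Hm1 Hm2; [|destruct Hm1]. destruct Hm1 as [Hx Hx1]; destruct Hm2 as [_ Hx2]. f_equal.
    apply (dist2_zero_eq d); auto.
    apply Rle_antisym; [|apply dist2_pos].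
    rewrite dist2_to_axpy.
    rewrite <- (vaxpy_sub c1 c2) in Hx2 at 1. rewrite dist2_to_axpy in Hx2.
    change (dot d (fun i => c2 i - c1 i) (fun i => c2 i - c1 i)) with (dist2 d c2 c1) in *.
    rewrite (dist2_sym d c2 c1), HD in *.
    set (T := dot d (fun i => x i - c1 i) (fun i => c2 i - c1 i)) in *.
    set (a := dist2 d x c1) in *.
    unfold t. pose proof (dist2_pos d x c1). fold a in H.
    assert (H2T : 2 * T >= a + (r1+r2)^2 - r2^2) by nra.
    apply (Rmult_le_reg_r (r1 + r2)); [lra|]. rewrite Rmult_0_l.
    replace ((a - 2 * (r1 / (r1 + r2)) * T + r1 / (r1 + r2) * (r1 / (r1 + r2)) * (r1 + r2) ^ 2) * (r1 + r2))
      with ((r1+r2) * a - r1 * (2 * T) + r1^2 * (r1 + r2)) by (field; lra).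
    nra.
Qed.

Lemma BB_disj_of : (r1 + r2) ^ 2 <= dist2 d c1 c2 -> Disjoint d (CBall c1 r1) (CBall c2 r2).
Proof.
  intros H [[x|] [I1 I2]]; [|destruct I1 as [[] _]].
  apply int_ball_nec in I1; auto. apply int_ball_nec in I2; auto.
  pose proof (tri d c1 x c2). rewrite (dist2_sym d c1 x) in H0.
  assert (sqrt (dist2 d x c1) < r1) by (apply sqrt_lt_of; [apply dist2_pos|lra|nra]).
  assert (sqrt (dist2 d x c2) < r2) by (apply sqrt_lt_of; [apply dist2_pos|lra|nra]).
  assert (dist2 d c1 c2 < (r1 + r2) * (r1 + r2)) by (apply lt_of_sqrt; [apply dist2_pos|lra]). nra.
Qed.
End BB.

Definition e0 : vec := fun i => if (i =? 0)%nat then 1 else 0.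
Lemma e0_in d : inRd (S d) e0.
Proof. intros [|i] Hi; [lia|reflexivity]. Qed.
Lemma dot_e0 d : dot (S d) e0 e0 = 1.
Proof. induction d; simpl in *; [unfold e0; simpl; ring|]. rewrite IHd. unfold e0; simpl; ring. Qed.

Lemma dist2_zero_pt d x y : dist2 d x y = 0 -> forall i, (i < d)%nat -> x i = y i.
Proof. intros H i Hi. pose proof (dot_zero d _ H i Hi). simpl in H0. lra. Qed.

Section BE.
Variables (d : nat) (c1 c2 : vec) (r1 r2 : R).
Hypotheses (Hd : (1 <= d)%nat) (Hc1 : inRd d c1) (Hc2 : inRd d c2) (Hr1 : 0 < r1) (Hr2 : 0 < r2).

Lemma BE_disj : Disjoint d (CBall c1 r1) (CExt c2 r2) -> sqrt (dist2 d c1 c2) + r1 <= r2.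
Proof.
  intros H. set (D := sqrt (dist2 d c1 c2)).
  destruct (Rle_or_lt (D + r1) r2) as [|Hlt]; auto. exfalso; apply H.
  pose proof (dist2_pos d c1 c2). pose proof (sqrt_pos (dist2 d c1 c2)). fold D in H1.
  assert (HD2 : D * D = dist2 d c1 c2) by (apply sqrt_sqrt; auto).
  destruct (Rle_lt_or_eq_dec _ _ H1) as [HDp|HD0].
  - set (s := (r1 + Rmax 0 (r2 - D)) / 2).
    assert (Hs1 : 0 < s) by (unfold s; pose proof (Rmax_l 0 (r2 - D)); lra).
    assert (Hs2 : s < r1) by (unfold s; apply Rmax_case_strong; intros; lra).
    assert (Hs3 : r2 < D + s) by (unfold s; pose proof (Rmax_r 0 (r2 - D)); lra).
    exists (Some (vaxpy c1 (s / D) (fun i => c1 i - c2 i))). split.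
    + apply int_ball_suff; auto. apply inRd_axpy; auto; apply inRd_sub; auto.
      rewrite dist2_sym, dist2_axpy_self. change (dot d (fun i => c1 i - c2 i) (fun i => c1 i - c2 i)) with (dist2 d c1 c2).
      rewrite <- HD2. replace (s / D * (s / D) * (D * D)) with (s * s) by (field; lra). nra.
    + apply int_ext_suff; auto. apply inRd_axpy; auto; apply inRd_sub; auto.
      rewrite dist2_axpy. change (dot d (fun i => c1 i - c2 i) (fun i => c1 i - c2 i)) with (dist2 d c1 c2).
      rewrite <- HD2. replace (D * D + 2 * (s / D) * (D * D) + s / D * (s / D) * (D * D)) with ((D + s) * (D + s)) by (field; lra). nra.
  - assert (HE : dist2 d c1 c2 = 0) by (rewrite <- HD2, <- HD0; ring).
    pose proof (dist2_zero_pt d c1 c2 HE) as Heq.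
    destruct d as [|d']; [lia|].
    set (s := (r1 + r2) / 2).
    assert (E : dist2 (S d') (vaxpy c1 s e0) c1 = s * s) by (rewrite dist2_sym, dist2_axpy_self, dot_e0; ring).
    exists (Some (vaxpy c1 s e0)). split.
    + apply int_ball_suff; auto. apply inRd_axpy; auto; apply e0_in.
      rewrite E. unfold s. nra.
    + apply int_ext_suff; auto. apply inRd_axpy; auto; apply e0_in.
      replace (dist2 (S d') (vaxpy c1 s e0) c2) with (dist2 (S d') (vaxpy c1 s e0) c1) by (unfold dist2; apply dot_ext; intros; rewrite Heq; auto).
      rewrite E. unfold s. nra.
Qed.

Lemma BE_common x : dist2 d x c1 <= r1 ^ 2 -> r2 ^ 2 <= dist2 d x c2 -> r2 <= sqrt (dist2 d c1 c2) + r1.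
Proof.
  intros H1 H2. pose proof (tri d x c1 c2).
  assert (sqrt (dist2 d x c1) <= r1) by (apply sqrt_le_of; [apply dist2_pos|lra|nra]).
  assert (r2 <= sqrt (dist2 d x c2)) by (apply sqrt_ge_of; [apply dist2_pos|lra|nra]). lra.
Qed.

Lemma BE_tangent : 0 < sqrt (dist2 d c1 c2) -> sqrt (dist2 d c1 c2) + r1 = r2 -> tangent d (CBall c1 r1) (CExt c2 r2).
Proof.
  intros HDp HD. set (D := sqrt (dist2 d c1 c2)) in *.
  assert (HD2 : D * D = dist2 d c1 c2) by (apply sqrt_sqrt, dist2_pos).
  set (p := vaxpy c1 (r1 / D) (fun i => c1 i - c2 i)).
  assert (Hp : inRd d p) by (apply inRd_axpy; auto; apply inRd_sub; auto).
  exists (Some p). simpl. split; [|split].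
  - split; auto. unfold p. rewrite dist2_sym, dist2_axpy_self. change (dot d (fun i => c1 i - c2 i) (fun i => c1 i - c2 i)) with (dist2 d c1 c2).
    rewrite <- HD2. right; field; lra.
  - split; auto. unfold p. rewrite dist2_axpy. change (dot d (fun i => c1 i - c2 i) (fun i => c1 i - c2 i)) with (dist2 d c1 c2).
    rewrite <- HD2, <- HD. right; field; lra.
  - intros [x|] Hm1 Hm2; [|destruct Hm1]. destruct Hm1 as [Hx Hx1]; destruct Hm2 as [_ Hx2]. f_equal.
    apply (dist2_zero_eq d); auto.
    apply Rle_antisym; [|apply dist2_pos].
    unfold p. rewrite dist2_to_axpy.
    rewrite <- (vaxpy_sub' c1 c2) in Hx2 at 1. rewrite dist2_to_axpy in Hx2.
    change (dot d (fun i => c1 i - c2 i) (fun i => c1 i - c2 i)) with (dist2 d c1 c2) in *.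
    rewrite <- HD2 in *.
    set (T := dot d (fun i => x i - c1 i) (fun i => c1 i - c2 i)) in *.
    set (a := dist2 d x c1) in *.
    pose proof (dist2_pos d x c1). fold a in H.
    assert (H2T : 2 * T >= 2 * D * r1) by (rewrite <- HD in Hx2; nra).
    apply (Rmult_le_reg_r D); [lra|]. rewrite Rmult_0_l.
    replace ((a - 2 * (r1 / D) * T + r1 / D * (r1 / D) * (D * D)) * D)
      with (D * a - r1 * (2 * T) + r1^2 * D) by (field; lra).
    nra.
Qed.
End BE.

Section BH.
Variables (d : nat) (c a : vec) (r b : R).
Hypotheses (Hc : inRd d c) (Ha : inRd d a) (HA : 0 < dot d a a) (Hr : 0 < r).

Let N := nrm d a.
Lemma BH_N : 0 < N /\ N * N = dot d a a.
Proof. split; [unfold N, nrm; apply sqrt_lt_R0; auto| apply nrm_sq]. Qed.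

Lemma BH_pt t : dist2 d (vaxpy c (- t) a) c = t * t * (N * N) /\ dot d a (vaxpy c (- t) a) = dot d a c - t * (N * N).
Proof.
  destruct BH_N as [_ HN]. split.
  - rewrite dist2_sym, dist2_axpy_self, HN. ring.
  - rewrite dot_sym, dot_axpy, HN, (dot_sym d c a). ring.
Qed.

Lemma BH_disj : Disjoint d (CBall c r) (HSpace a b) -> r * N <= dot d a c - b.
Proof.
  intros H. destruct BH_N as [HN HN2].
  destruct (Rle_or_lt (r * N) (dot d a c - b)) as [|Hlt]; auto. exfalso; apply H.
  set (s := (r + Rmax 0 ((dot d a c - b) / N)) / 2).
  assert (Hs1 : 0 < s) by (unfold s; pose proof (Rmax_l 0 ((dot d a c - b) / N)); lra).
  assert (Hq : (dot d a c - b) / N < r) by (apply (Rmult_lt_reg_r N); auto; field_simplify; lra).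
  assert (Hs2 : s < r) by (unfold s; apply Rmax_case_strong; intros; lra).
  assert (Hs3 : (dot d a c - b) / N < s) by (unfold s; pose proof (Rmax_r 0 ((dot d a c - b) / N)); lra).
  destruct (BH_pt (s / N)) as [E1 E2].
  exists (Some (vaxpy c (- (s / N)) a)). split.
  - apply int_ball_suff; auto. apply inRd_axpy; auto.
    rewrite E1. replace (s / N * (s / N) * (N * N)) with (s * s) by (field; lra). nra.
  - apply int_hs_suff; auto. apply inRd_axpy; auto.
    rewrite E2. replace (s / N * (N * N)) with (s * N) by (field; lra).
    assert (dot d a c - b < s * N) by (apply (Rmult_lt_compat_r N) in Hs3; auto; field_simplify in Hs3; lra). lra.
Qed.

Lemma BH_common x : dist2 d x c <= r ^ 2 -> dot d a x <= b -> dot d a c - b <= r * N.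
Proof.
  intros H1 H2. destruct BH_N as [HN HN2].
  pose proof (dot_le_nrm d a (fun i => c i - x i)). rewrite dot_sub_r in H.
  assert (nrm d (fun i => c i - x i) <= r). { change (sqrt (dist2 d c x) <= r). rewrite dist2_sym. apply sqrt_le_of; [apply dist2_pos|lra|nra]. }
  fold N in H. assert (N * nrm d (fun i => c i - x i) <= N * r) by (apply Rmult_le_compat_l; lra). lra.
Qed.

Lemma BH_tangent : dot d a c - b = r * N -> tangent d (CBall c r) (HSpace a b).
Proof.
  intros HE. destruct BH_N as [HN HN2].
  destruct (BH_pt (r / N)) as [E1 E2].
  set (p := vaxpy c (- (r / N)) a) in *.
  assert (Hp : inRd d p) by (apply inRd_axpy; auto).
  exists (Some p). simpl. split; [|split].
  - split; auto. rewrite E1. right; field; lra.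
  - split; auto. rewrite E2. right. replace (r / N * (N * N)) with (r * N) by (field; lra). lra.
  - intros [x|] Hm1 Hm2; [|destruct Hm1]. destruct Hm1 as [Hx Hx1]; destruct Hm2 as [_ Hx2]. f_equal.
    apply (dist2_zero_eq d); auto.
    apply Rle_antisym; [|apply dist2_pos].
    unfold p. rewrite dist2_to_axpy, dot_sub, <- HN2, (dot_sym d x a), (dot_sym d c a).
    replace (dist2 d x c - 2 * - (r / N) * (dot d a x - dot d a c) + - (r / N) * - (r / N) * (N * N))
      with (dist2 d x c + 2 * (r / N) * (dot d a x - dot d a c) + r * r) by (field; lra).
    assert (dot d a x - dot d a c <= - (r * N)) by lra.
    assert (2 * (r / N) * (dot d a x - dot d a c) <= 2 * (r / N) * (- (r * N))).
    { apply Rmult_le_compat_l; auto. assert (0 < r / N) by (apply Rdiv_lt_0_compat; auto). lra. }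
    replace (2 * (r / N) * (- (r * N))) with (- 2 * r * r) in H0 by (field; lra). nra.
Qed.

Lemma BH_disj_of : r * N <= dot d a c - b -> Disjoint d (CBall c r) (HSpace a b).
Proof.
  intros H [[x|] [I1 I2]]; [|destruct I1 as [[] _]].
  destruct BH_N as [HN HN2].
  apply int_ball_nec in I1; auto. apply int_hs_nec in I2; auto.
  pose proof (dot_le_nrm d a (fun i => c i - x i)). rewrite dot_sub_r in H0.
  assert (nrm d (fun i => c i - x i) < r). { change (sqrt (dist2 d c x) < r). rewrite dist2_sym. apply sqrt_lt_of; [apply dist2_pos|lra|nra]. }
  fold N in H0. assert (N * nrm d (fun i => c i - x i) < N * r) by (apply Rmult_lt_compat_l; lra). lra.
Qed.
End BH.

Section HH.
Variables (d : nat) (a1 a2 : vec) (b1 b2 : R).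
Hypotheses (Ha1 : inRd d a1) (Ha2 : inRd d a2) (HA1 : 0 < dot d a1 a1) (HA2 : 0 < dot d a2 a2).
Let N1 := nrm d a1.
Let N2 := nrm d a2.
Lemma HH_N : 0 < N1 /\ N1 * N1 = dot d a1 a1 /\ 0 < N2 /\ N2 * N2 = dot d a2 a2.
Proof. unfold N1, N2, nrm. repeat split; try (apply sqrt_lt_R0; auto); apply sqrt_sqrt; lra. Qed.

Definition antipar := forall i, (i < d)%nat -> a2 i / N2 = - (a1 i / N1).

Lemma antipar_dot x : antipar -> dot d a2 x = - (N2 / N1) * dot d a1 x.
Proof.
  intros H. destruct HH_N as [P1 [E1 [P2 E2]]].
  rewrite (dot_ext d a2 x (fun i => - (N2 / N1) * a1 i) x).
  - apply dot_scal.
  - intros i Hi. specialize (H i Hi). apply (Rmult_eq_reg_r (/ N2)); [|apply Rinv_neq_0_compat; lra].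
    replace (a2 i * / N2) with (a2 i / N2) by auto. rewrite H. field; lra.
  - auto.
Qed.

Lemma HH_disj : Disjoint d (HSpace a1 b1) (HSpace a2 b2) -> antipar /\ b1 / N1 + b2 / N2 <= 0.
Proof.
  intros H. destruct HH_N as [P1 [E1 [P2 E2]]].
  assert (AP : antipar).
  { set (w := fun i => (/ N1) * a1 i + (/ N2) * a2 i).
    assert (W1 : dot d a1 w = N1 * (dot d w w / 2)).
    { unfold w. rewrite dot_lin_r, dot_lin, !dot_lin_r, <- E1, <- E2, (dot_sym d a2 a1). field; lra. }
    assert (W2 : dot d a2 w = N2 * (dot d w w / 2)).
    { unfold w. rewrite dot_lin_r, dot_lin, !dot_lin_r, <- E1, <- E2, (dot_sym d a2 a1). field; lra. }
    destruct (Rle_lt_or_eq_dec _ _ (dot_pos d w)) as [Hw|Hw].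
    - exfalso. apply H.
      set (K := Rabs b1 / N1 + Rabs b2 / N2 + 1).
      assert (HK1 : Rabs b1 / N1 < K /\ Rabs b2 / N2 < K /\ 1 <= K).
      { unfold K. pose proof (Rabs_pos b1); pose proof (Rabs_pos b2).
        assert (0 <= Rabs b1 / N1) by (apply Rmult_le_pos; [lra|left; apply Rinv_0_lt_compat; lra]).
        assert (0 <= Rabs b2 / N2) by (apply Rmult_le_pos; [lra|left; apply Rinv_0_lt_compat; lra]). lra. }
      set (t := 2 * K / dot d w w).
      assert (Hin : inRd d (vaxpy zv (- t) w)).
      { apply inRd_axpy; [intros ? ?; reflexivity|]. unfold w. intros i Hi. rewrite Ha1, Ha2 by auto. ring. }
      exists (Some (vaxpy zv (- t) w)). split; apply int_hs_suff; auto.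
      + rewrite dot_sym, dot_axpy, (dot_sym d w a1), W1.
        replace (dot d zv a1) with 0 by (unfold zv; clear; induction d; simpl; auto; rewrite <- IHn; ring).
        unfold t. replace (0 + - (2 * K / dot d w w) * (N1 * (dot d w w / 2))) with (- (K * N1)) by (field; lra).
        pose proof (Rle_abs (- b1)). rewrite Rabs_Ropp in H0.
        destruct HK1 as [HK1 [_ HK3]]. apply (Rmult_lt_compat_r N1) in HK1; [|lra].
        replace (Rabs b1 / N1 * N1) with (Rabs b1) in HK1 by (field; lra). nra.
      + rewrite dot_sym, dot_axpy, (dot_sym d w a2), W2.
        replace (dot d zv a2) with 0 by (unfold zv; clear; induction d; simpl; auto; rewrite <- IHn; ring).
        unfold t. replace (0 + - (2 * K / dot d w w) * (N2 * (dot d w w / 2))) with (- (K * N2)) by (field; lra).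
        pose proof (Rle_abs (- b2)). rewrite Rabs_Ropp in H0.
        destruct HK1 as [_ [HK1 HK3]]. apply (Rmult_lt_compat_r N2) in HK1; [|lra].
        replace (Rabs b2 / N2 * N2) with (Rabs b2) in HK1 by (field; lra). nra.
    - intros i Hi. pose proof (dot_zero d w (eq_sym Hw) i Hi). unfold w in H0.
      unfold Rdiv. lra. }
  split; auto.
  destruct (Rle_or_lt (b1 / N1 + b2 / N2) 0) as [|Hlt]; auto. exfalso. apply H.
  set (s := (b1 / N1 - b2 / N2) / (2 * N1)).
  assert (Hin : inRd d (vaxpy zv s a1)) by (apply inRd_axpy; auto; intros ? ?; reflexivity).
  assert (D0 : forall u, dot d zv u = 0) by (intros u; unfold zv; clear; induction d; simpl; auto; rewrite IHn; ring).
  exists (Some (vaxpy zv s a1)). split; apply int_hs_suff; auto.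
  - rewrite dot_sym, dot_axpy, D0, <- E1. unfold s.
    replace (0 + (b1 / N1 - b2 / N2) / (2 * N1) * (N1 * N1)) with ((b1 - N1 * (b2 / N2)) / 2) by (field; lra).
    assert (b1 / N1 * N1 = b1) by (field; lra).
    assert (- (N1 * (b2 / N2)) < b1). { apply (Rmult_lt_reg_r (/ N1)). apply Rinv_0_lt_compat; lra.
      replace (- (N1 * (b2 / N2)) * / N1) with (- (b2 / N2)) by (field; lra). fold (b1 / N1). lra. }
    lra.
  - rewrite antipar_dot by auto. rewrite dot_sym, dot_axpy, D0, <- E1. unfold s.
    replace (- (N2 / N1) * (0 + (b1 / N1 - b2 / N2) / (2 * N1) * (N1 * N1))) with ((b2 - N2 * (b1 / N1)) / 2) by (field; lra).
    assert (- (N2 * (b1 / N1)) < b2). { apply (Rmult_lt_reg_r (/ N2)). apply Rinv_0_lt_compat; lra.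
      replace (- (N2 * (b1 / N1)) * / N2) with (- (b1 / N1)) by (field; lra). fold (b2 / N2). lra. }
    lra.
Qed.

Lemma HH_common x : antipar -> dot d a1 x <= b1 -> dot d a2 x <= b2 -> 0 <= b1 / N1 + b2 / N2.
Proof.
  intros AP H1 H2. destruct HH_N as [P1 [E1 [P2 E2]]]. rewrite antipar_dot in H2 by auto.
  assert (- (N2 / N1) * dot d a1 x * / N2 <= b2 / N2) by (apply Rmult_le_compat_r; [left; apply Rinv_0_lt_compat; lra| lra]).
  replace (- (N2 / N1) * dot d a1 x * / N2) with (- (dot d a1 x / N1)) in H by (field; lra).
  assert (dot d a1 x / N1 <= b1 / N1) by (apply Rmult_le_compat_r; [left; apply Rinv_0_lt_compat; lra| lra]).
  lra.
Qed.

Lemma HH_tangent : antipar -> b1 / N1 + b2 / N2 < 0 -> tangent d (HSpace a1 b1) (HSpace a2 b2).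
Proof.
  intros AP Hb. exists None. simpl. split; [auto|split; [auto|]].
  intros [x|] Hm1 Hm2; auto. destruct Hm1 as [_ H1], Hm2 as [_ H2].
  pose proof (HH_common x AP H1 H2). lra.
Qed.

Lemma HH_disj_of : antipar -> b1 / N1 + b2 / N2 <= 0 -> Disjoint d (HSpace a1 b1) (HSpace a2 b2).
Proof.
  intros AP Hb [[x|] [I1 I2]].
  - destruct HH_N as [P1 [E1 [P2 E2]]].
    apply int_hs_nec in I1; auto. apply int_hs_nec in I2; auto. rewrite antipar_dot in I2 by auto.
    assert (- (N2 / N1) * dot d a1 x * / N2 < b2 / N2) by (apply Rmult_lt_compat_r; [apply Rinv_0_lt_compat; lra| lra]).
    replace (- (N2 / N1) * dot d a1 x * / N2) with (- (dot d a1 x / N1)) in H by (field; lra).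
    assert (dot d a1 x / N1 < b1 / N1) by (apply Rmult_lt_compat_r; [apply Rinv_0_lt_compat; lra| lra]).
    lra.
  - apply (int_hs_inf d a1 b1); auto.
Qed.
End HH.

Lemma EE_nd d c1 r1 c2 r2 : 0 < r1 -> 0 < r2 -> ~ Disjoint d (CExt c1 r1) (CExt c2 r2).
Proof. intros H1 H2 H. apply H. exists None. split; apply int_ext_inf; auto. Qed.

Lemma EH_nd d c r a b : inRd d c -> inRd d a -> 0 < dot d a a -> 0 < r -> ~ Disjoint d (CExt c r) (HSpace a b).
Proof.
  intros Hc Ha HA Hr H. apply H.
  set (A := dot d a a) in *. set (K := Rabs (dot d a c) + Rabs b + r + 1). set (t := K * (1 + / A)).
  pose proof (Rinv_0_lt_compat A HA).
  assert (E3 : t * A = K * (A + 1)) by (unfold t; field; lra).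
  assert (E4 : t * t * A = K * K * (A + 2 + / A)) by (unfold t; field; lra).
  assert (HK : r + 1 <= K) by (unfold K; pose proof (Rabs_pos b); pose proof (Rabs_pos (dot d a c)); lra).
  exists (Some (vaxpy c (- t) a)). split.
  - apply int_ext_suff; auto. apply inRd_axpy; auto.
    rewrite dist2_sym, dist2_axpy_self. fold A. replace (- t * - t * A) with (t * t * A) by ring. rewrite E4. nra.
  - apply int_hs_suff; auto. apply inRd_axpy; auto.
    rewrite dot_sym, dot_axpy. fold A.
    replace (dot d c a + - t * A) with (dot d a c - K * (A + 1)) by (rewrite dot_sym; lra).
    pose proof (Rle_abs (dot d a c)). pose proof (Rabs_pos b). pose proof (Rle_abs (-b)). rewrite Rabs_Ropp in H3.
    assert (K <= K * (A + 1)) by nra. unfold K in *. lra.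
Qed.

Definition mk4 d (p : vec) (X Y : R) : vec :=
  fun i => if (i <? d)%nat then p i else if (i =? d)%nat then X else if (i =? S d)%nat then Y else 0.
Definition Lf d (u v : vec) : R := dot d u v + u d * v d - u (S d) * v (S d).
Definition negv (u : vec) : vec := fun i => - u i.
Definition ballv d c r := mk4 d (fun i => c i / r) ((dot d c c - r ^ 2 - 1) / (2 * r)) ((dot d c c - r ^ 2 + 1) / (2 * r)).
Definition hsv d a b := mk4 d (fun i => a i / nrm d a) (b / nrm d a) (b / nrm d a).
Definition lv d B : vec :=
  match B with
  | CBall c r => ballv d c r
  | CExt c r => negv (ballv d c r)
  | HSpace a b => negv (hsv d a b)
  end.

Lemma mk4_d d p X Y : mk4 d p X Y d = X.
Proof. unfold mk4. rewrite Nat.ltb_irrefl, Nat.eqb_refl. auto. Qed.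
Lemma mk4_Sd d p X Y : mk4 d p X Y (S d) = Y.
Proof. unfold mk4. replace (S d <? d)%nat with false by (symmetry; apply Nat.ltb_ge; lia).
  replace (S d =? d)%nat with false by (symmetry; apply Nat.eqb_neq; lia). rewrite Nat.eqb_refl. auto. Qed.
Lemma mk4_lt d p X Y i : (i < d)%nat -> mk4 d p X Y i = p i.
Proof. intros. unfold mk4. replace (i <? d)%nat with true by (symmetry; apply Nat.ltb_lt; lia). auto. Qed.

Lemma Lf_mk4 d p X Y p' X' Y' : Lf d (mk4 d p X Y) (mk4 d p' X' Y') = dot d p p' + X * X' - Y * Y'.
Proof. unfold Lf. rewrite !mk4_d, !mk4_Sd. f_equal. f_equal. apply dot_ext; intros; apply mk4_lt; auto. Qed.

Lemma dot_negv_l d u v : dot d (negv u) v = - dot d u v.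
Proof. unfold negv. induction d; simpl; [ring|]. rewrite IHd. ring. Qed.
Lemma dot_negv_r d u v : dot d u (negv v) = - dot d u v.
Proof. rewrite dot_sym, dot_negv_l, dot_sym; auto. Qed.
Lemma Lf_negv_l d u v : Lf d (negv u) v = - Lf d u v.
Proof. unfold Lf. rewrite dot_negv_l. unfold negv. ring. Qed.
Lemma Lf_negv_r d u v : Lf d u (negv v) = - Lf d u v.
Proof. unfold Lf. rewrite dot_negv_r. unfold negv. ring. Qed.
Lemma Lf_sym d u v : Lf d u v = Lf d v u.
Proof. unfold Lf. rewrite dot_sym. ring. Qed.

Lemma dot_div d u v a b : a <> 0 -> b <> 0 -> dot d (fun i => u i / a) (fun i => v i / b) = dot d u v / (a * b).
Proof. intros. induction d; simpl; [field; auto|]. rewrite IHd. field; auto. Qed.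

Lemma Lf_BB d c1 r1 c2 r2 : 0 < r1 -> 0 < r2 ->
  Lf d (ballv d c1 r1) (ballv d c2 r2) = (r1 ^ 2 + r2 ^ 2 - dist2 d c1 c2) / (2 * r1 * r2).
Proof.
  intros. unfold ballv. rewrite Lf_mk4, dot_div by lra. rewrite dist2_expand. field; lra.
Qed.

Lemma valid_hs_pos d a : (exists i, (i < d)%nat /\ a i <> 0) -> 0 < dot d a a.
Proof. intros [i [Hi Ha]]. apply (dot_pos_nz d a i); auto. Qed.

Lemma nrm_pos' d a : 0 < dot d a a -> 0 < nrm d a.
Proof. intros; unfold nrm; apply sqrt_lt_R0; auto. Qed.

Lemma Lf_BH d c r a b : 0 < r -> 0 < dot d a a ->
  Lf d (ballv d c r) (hsv d a b) = (dot d a c - b) / (r * nrm d a).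
Proof.
  intros Hr HA. pose proof (nrm_pos' d a HA). unfold ballv, hsv. rewrite Lf_mk4, dot_div by lra.
  rewrite (dot_sym d c a). field; lra.
Qed.

Lemma Lf_HH d a1 b1 a2 b2 : 0 < dot d a1 a1 -> 0 < dot d a2 a2 ->
  Lf d (hsv d a1 b1) (hsv d a2 b2) = dot d a1 a2 / (nrm d a1 * nrm d a2).
Proof.
  intros H1 H2. pose proof (nrm_pos' d a1 H1). pose proof (nrm_pos' d a2 H2). unfold hsv. rewrite Lf_mk4, dot_div by lra.
  field; lra.
Qed.

Lemma Lf_self d B : valid_ball d B -> Lf d (lv d B) (lv d B) = 1.
Proof.
  destruct B as [c r|c r|a b]; simpl; intros [Hc Hr].
  - rewrite Lf_BB by auto. unfold dist2. rewrite (dot_ext d _ _ (fun _ => 0 * c 0%nat) (fun _ => 0 * c 0%nat)) by (intros; ring).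
    rewrite dot_scal. field; lra.
  - rewrite Lf_negv_l, Lf_negv_r, Lf_BB by auto. unfold dist2. rewrite (dot_ext d _ _ (fun _ => 0 * c 0%nat) (fun _ => 0 * c 0%nat)) by (intros; ring).
    rewrite dot_scal. field; lra.
  - apply valid_hs_pos in Hr. rewrite Lf_negv_l, Lf_negv_r, Lf_HH by auto. rewrite <- nrm_sq.
    pose proof (nrm_pos' d a Hr). field; lra.
Qed.

Definition compl d B1 B2 := forall k, lv d B2 k = - lv d B1 k.

Definition pairP d B1 B2 :=
  Lf d (lv d B1) (lv d B2) <= -1 /\
  (tangent d B1 B2 -> Lf d (lv d B1) (lv d B2) = -1) /\
  (Lf d (lv d B1) (lv d B2) = -1 -> ~ compl d B1 B2 -> tangent d B1 B2).

Lemma pairP_sym d B1 B2 : pairP d B2 B1 -> pairP d B1 B2.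
Proof.
  unfold pairP; intros [H1 [H2 H3]]. rewrite Lf_sym. split; [|split]; auto.
  - intros; apply H2; apply tangent_sym; auto.
  - intros HL Hc. apply tangent_sym. apply H3; auto. intros Hc'. apply Hc. intros k. rewrite Hc'. ring.
Qed.

Lemma pairP_BB d c1 r1 c2 r2 : inRd d c1 -> inRd d c2 -> 0 < r1 -> 0 < r2 ->
  Disjoint d (CBall c1 r1) (CBall c2 r2) -> pairP d (CBall c1 r1) (CBall c2 r2).
Proof.
  intros Hc1 Hc2 Hr1 Hr2 HD. unfold pairP. simpl. rewrite Lf_BB by auto.
  pose proof (BB_disj d c1 c2 r1 r2 Hc1 Hc2 Hr1 Hr2 HD) as H1.
  assert (E : forall X, X / (2 * r1 * r2) = -1 <-> X = - (2 * r1 * r2)).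
  { intros X; split; intros H. replace X with (X / (2*r1*r2) * (2*r1*r2)) by (field; lra). rewrite H; ring.
    rewrite H; field; lra. }
  split; [|split].
  - apply (Rmult_le_reg_r (2 * r1 * r2)); [nra|]. field_simplify; [|lra]. nra.
  - intros [[x|] [Hm1 [Hm2 _]]]; [|destruct Hm1]. destruct Hm1 as [_ Hm1], Hm2 as [_ Hm2].
    pose proof (BB_common d c1 c2 r1 r2 Hr1 Hr2 x Hm1 Hm2). apply E. nra.
  - intros HL _. apply E in HL. apply BB_tangent; auto. nra.
Qed.

Lemma pairP_BE d c1 r1 c2 r2 : (1 <= d)%nat -> inRd d c1 -> inRd d c2 -> 0 < r1 -> 0 < r2 ->
  Disjoint d (CBall c1 r1) (CExt c2 r2) -> pairP d (CBall c1 r1) (CExt c2 r2).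
Proof.
  intros Hd Hc1 Hc2 Hr1 Hr2 HD. unfold pairP. simpl. rewrite Lf_negv_r, Lf_BB by auto.
  pose proof (BE_disj d c1 c2 r1 r2 Hd Hc1 Hc2 Hr1 Hr2 HD) as H1.
  set (D := sqrt (dist2 d c1 c2)) in *.
  assert (HD2 : D * D = dist2 d c1 c2) by (apply sqrt_sqrt, dist2_pos).
  pose proof (sqrt_pos (dist2 d c1 c2)). fold D in H.
  rewrite <- HD2.
  assert (E : forall X, - (X / (2 * r1 * r2)) = -1 <-> X = 2 * r1 * r2).
  { intros X; split; intros H'. replace X with (X / (2*r1*r2) * (2*r1*r2)) by (field; lra).
    replace (X / (2*r1*r2)) with 1 by lra. ring.
    rewrite H'; field; lra. }
  split; [|split].
  - assert (0 <= (r1 ^ 2 + r2 ^ 2 - D * D - 2 * r1 * r2) / (2 * r1 * r2)).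
    { apply Rmult_le_pos; [nra|left; apply Rinv_0_lt_compat; nra]. }
    replace ((r1 ^ 2 + r2 ^ 2 - D * D - 2 * r1 * r2) / (2 * r1 * r2)) with ((r1 ^ 2 + r2 ^ 2 - D * D) / (2 * r1 * r2) - 1) in H0 by (field; lra).
    lra.
  - intros [[x|] [Hm1 [Hm2 _]]]; [|destruct Hm1]. destruct Hm1 as [_ Hm1], Hm2 as [_ Hm2].
    pose proof (BE_common d c1 c2 r1 r2 Hr1 Hr2 x Hm1 Hm2). fold D in H0. apply E.
    assert (D = r2 - r1) by lra. subst D. rewrite H2. ring.
  - intros HL Hnc. apply E in HL.
    assert (HDr : D = r2 - r1) by nra.
    destruct (Rle_lt_or_eq_dec _ _ H) as [Hpos|Hz].
    + apply BE_tangent; auto. fold D; lra.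
    + exfalso. apply Hnc. assert (r1 = r2) by lra. subst r2.
      assert (Hz0 : dist2 d c1 c2 = 0) by (rewrite <- HD2, <- Hz; ring).
      pose proof (dist2_zero_pt d c1 c2 Hz0) as Heq.
      intros k. simpl. unfold negv. f_equal. unfold ballv, mk4.
      destruct (k <? d)%nat eqn:Hk.
      * apply Nat.ltb_lt in Hk. rewrite Heq; auto.
      * rewrite (dot_ext d c2 c2 c1 c1) by (intros; rewrite Heq; auto). auto.
Qed.

Lemma pairP_BH d c r a b : inRd d c -> inRd d a -> 0 < dot d a a -> 0 < r ->
  Disjoint d (CBall c r) (HSpace a b) -> pairP d (CBall c r) (HSpace a b).
Proof.
  intros Hc Ha HA Hr HD. unfold pairP. simpl. rewrite Lf_negv_r, Lf_BH by auto.
  pose proof (BH_disj d c a r b Hc Ha HA Hr HD) as H1.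
  pose proof (nrm_pos' d a HA) as HN.
  assert (E : forall X, - (X / (r * nrm d a)) = -1 <-> X = r * nrm d a).
  { intros X; split; intros H'. replace X with (X / (r * nrm d a) * (r * nrm d a)) by (field; lra).
    replace (X / (r * nrm d a)) with 1 by lra. ring.
    rewrite H'; field; lra. }
  split; [|split].
  - assert (r * nrm d a / (r * nrm d a) <= (dot d a c - b) / (r * nrm d a)).
    { apply Rmult_le_compat_r; [left; apply Rinv_0_lt_compat; nra| lra]. }
    replace (r * nrm d a / (r * nrm d a)) with 1 in H by (field; lra). lra.
  - intros [[x|] [Hm1 [Hm2 _]]]; [|destruct Hm1]. destruct Hm1 as [_ Hm1], Hm2 as [_ Hm2].
    pose proof (BH_common d c a r b HA Hr x Hm1 Hm2). apply E. lra.
  - intros HL _. apply E in HL. apply BH_tangent; auto.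
Qed.

Lemma pairP_HH d a1 b1 a2 b2 : inRd d a1 -> inRd d a2 -> 0 < dot d a1 a1 -> 0 < dot d a2 a2 ->
  Disjoint d (HSpace a1 b1) (HSpace a2 b2) -> pairP d (HSpace a1 b1) (HSpace a2 b2).
Proof.
  intros Ha1 Ha2 HA1 HA2 HD. unfold pairP. simpl. rewrite Lf_negv_r, Lf_negv_l, Lf_HH by auto.
  destruct (HH_disj d a1 a2 b1 b2 Ha1 Ha2 HA1 HA2 HD) as [AP Hb].
  pose proof (nrm_pos' d a1 HA1). pose proof (nrm_pos' d a2 HA2).
  assert (HL : - - (dot d a1 a2 / (nrm d a1 * nrm d a2)) = -1).
  { rewrite dot_sym, (antipar_dot d a1 a2 HA1 HA2 a1 AP), <- nrm_sq. field; lra. }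
  rewrite HL. split; [lra|split; [auto|]].
  intros _ Hnc. apply HH_tangent; auto.
  destruct (Rle_lt_or_eq_dec _ _ Hb) as [|Hz]; auto. exfalso; apply Hnc.
  intros k. simpl. unfold negv. f_equal. unfold hsv, mk4.
  destruct (k <? d)%nat eqn:Hk.
  - apply Nat.ltb_lt in Hk. apply AP; auto.
  - destruct (k =? d)%nat; [lra|]. destruct (k =? S d)%nat; [lra|ring].
Qed.

Lemma pair_L d B1 B2 : (1 <= d)%nat -> valid_ball d B1 -> valid_ball d B2 -> Disjoint d B1 B2 -> pairP d B1 B2.
Proof.
  intros Hd V1 V2 HD.
  destruct B1 as [c1 r1|c1 r1|a1 b1], B2 as [c2 r2|c2 r2|a2 b2]; simpl in V1, V2;
    destruct V1 as [V1 W1], V2 as [V2 W2].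
  - apply pairP_BB; auto.
  - apply pairP_BE; auto.
  - apply pairP_BH; auto. apply valid_hs_pos; auto.
  - apply pairP_sym, pairP_BE; auto. apply Disjoint_sym; auto.
  - exfalso; apply (EE_nd d c1 r1 c2 r2); auto.
  - exfalso; apply (EH_nd d c1 r1 a2 b2); auto. apply valid_hs_pos; auto.
  - apply pairP_sym, pairP_BH; auto. apply valid_hs_pos; auto. apply Disjoint_sym; auto.
  - exfalso; apply (EH_nd d c2 r2 a1 b1); auto. apply valid_hs_pos; auto. apply Disjoint_sym; auto.
  - apply pairP_HH; auto; apply valid_hs_pos; auto.
Qed.

Definition sk (i0 i : nat) : nat := if (i <? i0)%nat then i else S i.

Lemma sk_ne i0 i : sk i0 i <> i0.
Proof. unfold sk. destruct (Nat.ltb_spec i i0); lia. Qed.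
Lemma sk_le i0 i n : (i <= n)%nat -> (sk i0 i <= S n)%nat.
Proof. unfold sk. destruct (Nat.ltb_spec i i0); lia. Qed.

Lemma sum_skip n i0 g : (i0 <= n)%nat -> sumR (S n) g = g i0 + sumR n (fun i => g (sk i0 i)).
Proof.
  induction n; intros Hi.
  - assert (i0 = 0%nat) by lia. subst. simpl. ring.
  - destruct (Nat.eq_dec i0 (S n)) as [->|Hne].
    + change (sumR (S (S n)) g) with (sumR (S n) g + g (S n)).
      rewrite (sumR_ext (S n) (fun i => g (sk (S n) i)) g). ring.
      intros i Hi'. unfold sk. replace (i <? S n)%nat with true by (symmetry; apply Nat.ltb_lt; lia). auto.
    + change (sumR (S (S n)) g) with (sumR (S n) g + g (S n)). rewrite IHn by lia.
      change (sumR (S n) (fun i => g (sk i0 i))) with (sumR n (fun i => g (sk i0 i)) + g (sk i0 n)).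
      replace (sk i0 n) with (S n) by (unfold sk; replace (n <? i0)%nat with false by (symmetry; apply Nat.ltb_ge; lia); auto). ring.
Qed.

Lemma dep n (F : nat -> vec) : (forall i, (i <= n)%nat -> inRd n (F i)) ->
  exists a : nat -> R, (exists i, (i <= n)%nat /\ a i <> 0) /\ forall k, sumR (S n) (fun i => a i * F i k) = 0.
Proof.
  revert F. induction n as [|m IH]; intros F HF.
  - exists (fun _ => 1). split. exists 0%nat; split; [lia|lra].
    intros k. simpl. rewrite (HF 0%nat) by lia. ring.
  - destruct (classic (exists i0, (i0 <= S m)%nat /\ F i0 m <> 0)) as [[i0 [Hi0 Hnz]]|Hall].
    + set (G := fun i k => F (sk i0 i) k - (F (sk i0 i) m / F i0 m) * F i0 k).
      assert (HG : forall i, (i <= m)%nat -> inRd m (G i)).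
      { intros i Hi k Hk. unfold G. destruct (Nat.eq_dec k m) as [->|Hne].
        - field; auto.
        - rewrite !(HF _ (sk_le i0 i m Hi) k), (HF i0 Hi0 k) by lia. ring. }
      destruct (IH G HG) as [b [[i1 [Hi1 Hb]] Hsum]].
      set (A0 := - sumR (S m) (fun i => b i * F (sk i0 i) m) / F i0 m).
      set (a := fun j => if (j =? i0)%nat then A0 else b (if (j <? i0)%nat then j else (j - 1)%nat)).
      assert (Ha : forall i, a (sk i0 i) = b i).
      { intros i. unfold a. replace (sk i0 i =? i0)%nat with false by (symmetry; apply Nat.eqb_neq, sk_ne).
        unfold sk. destruct (Nat.ltb_spec i i0).
        - replace (i <? i0)%nat with true by (symmetry; apply Nat.ltb_lt; lia). auto.
        - replace (S i <? i0)%nat with false by (symmetry; apply Nat.ltb_ge; lia). f_equal; lia. }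
      exists a. split.
      * exists (sk i0 i1). split; [apply sk_le; auto|]. rewrite Ha; auto.
      * intros k. rewrite (sum_skip (S m) i0) by auto.
        rewrite (sumR_ext (S m) _ (fun i => b i * F (sk i0 i) k)) by (intros; rewrite Ha; auto).
        specialize (Hsum k). unfold G in Hsum.
        rewrite (sumR_ext (S m) _ (fun i => b i * F (sk i0 i) k + (- F i0 k / F i0 m) * (b i * F (sk i0 i) m))) in Hsum
          by (intros; field; auto).
        rewrite sumR_plus, sumR_scal in Hsum.
        unfold a. rewrite Nat.eqb_refl. unfold A0.
        replace (- sumR (S m) (fun i => b i * F (sk i0 i) m) / F i0 m * F i0 k) with
          (- F i0 k / F i0 m * sumR (S m) (fun i => b i * F (sk i0 i) m)) by (field; auto).
        lra.
    + assert (HF' : forall i, (i <= m)%nat -> inRd m (F i)).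
      { intros i Hi k Hk. destruct (Nat.eq_dec k m) as [->|Hne].
        - destruct (Req_dec (F i m) 0); auto. exfalso; apply Hall; exists i; split; auto; lia.
        - apply HF; lia. }
      destruct (IH F HF') as [b [[i1 [Hi1 Hb]] Hsum]].
      exists (fun i => if (i <=? m)%nat then b i else 0). split.
      * exists i1. split; [lia|]. replace (i1 <=? m)%nat with true by (symmetry; apply Nat.leb_le; lia). auto.
      * intros k. change (sumR (S (S m)) ?f) with (sumR (S m) f + f (S m)).

        rewrite (sumR_ext (S m) _ (fun i => b i * F i k)). rewrite Hsum. replace (S m <=? m)%nat with false by (symmetry; apply Nat.leb_gt; lia). ring.
        intros i Hi. replace (i <=? m)%nat with true by (symmetry; apply Nat.leb_le; lia). auto.
Qed.

Lemma dot_zero_l d z : dot d (fun _ => 0) z = 0.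
Proof. induction d; simpl; [auto|rewrite IHd; ring]. Qed.

Lemma Lf_lin d a b u w z : Lf d (fun k => a * u k + b * w k) z = a * Lf d u z + b * Lf d w z.
Proof. unfold Lf. rewrite dot_lin. ring. Qed.

Lemma Lf_zero d u z : (forall k, u k = 0) -> Lf d u z = 0.
Proof. intros H. replace u with (fun _ : nat => 0) by (apply functional_extensionality; intros; rewrite H; auto).
  unfold Lf. rewrite dot_zero_l. ring. Qed.

Lemma Lf_sum d n (F : nat -> vec) z : Lf d (fun k => sumR n (fun i => F i k)) z = sumR n (fun i => Lf d (F i) z).
Proof.
  induction n.
  - simpl. apply Lf_zero; auto.
  - simpl. rewrite <- IHn. rewrite <- (Rmult_1_l (Lf d (fun k => sumR n (fun i => F i k)) z)).
    rewrite <- (Rmult_1_l (Lf d (F n) z)). rewrite <- Lf_lin. f_equal. apply functional_extensionality; intros; ring.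
Qed.

Lemma Lf_pos d x s : Lf d x s = 0 -> Lf d s s < 0 -> 0 <= Lf d x x.
Proof.
  intros H1 H2. unfold Lf in *.
  pose proof (CS (S d) x s). simpl dot in H. 
  pose proof (dot_pos (S d) x). pose proof (dot_pos (S d) s). simpl dot in H0, H3.
  set (P := dot d x s + x d * s d) in *. set (X := x (S d)) in *. set (S' := s (S d)) in *.
  set (A := dot d x x + x d * x d) in *. set (B := dot d s s + s d * s d) in *.
  assert (P = X * S') by lra. assert (B < S' * S') by lra.
  destruct (Rle_or_lt (X * X) A); [lra|]. exfalso.
  assert (A * B <= A * (S' * S')) by (apply Rmult_le_compat_l; lra).
  assert (A * (S' * S') < X * X * (S' * S')). { apply Rmult_lt_compat_r; nra. }
  rewrite H4 in H. nra.
Qed.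

Lemma sum_sign d p a : (p < d)%nat -> sumR d (fun t => a t * (if (t =? p)%nat then 1 else -1)) = 2 * a p - sumR d a.
Proof.
  induction d; intros Hp; [lia|]. simpl.
  destruct (Nat.eq_dec p d) as [->|Hne].
  - rewrite Nat.eqb_refl. rewrite (sumR_ext d _ (fun t => -1 * a t)).
    rewrite sumR_scal. ring. intros t Ht. replace (t =? d)%nat with false by (symmetry; apply Nat.eqb_neq; lia). ring.
  - rewrite IHd by lia. replace (d =? p)%nat with false by (symmetry; apply Nat.eqb_neq; lia). ring.
Qed.

Lemma sum_const d c : sumR d (fun _ => c) = INR d * c.
Proof. induction d; simpl sumR; [simpl; ring|]. rewrite IHd, S_INR. ring. Qed.

Lemma inRd_sum n d (F : nat -> vec) : (forall i, (i < d)%nat -> inRd n (F i)) -> inRd n (fun k => sumR d (fun i => F i k)).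
Proof. intros H k Hk. apply sumR_zero. intros i Hi. apply H; auto. Qed.

Lemma Lf_scal d a u z : Lf d (fun k => a * u k) z = a * Lf d u z.
Proof. unfold Lf. rewrite dot_scal. ring. Qed.
Lemma Lf_add d u w z : Lf d (fun k => u k + w k) z = Lf d u z + Lf d w z.
Proof. unfold Lf. rewrite dot_add. ring. Qed.
Lemma Lf_sub d u w z : Lf d (fun k => u k - w k) z = Lf d u z - Lf d w z.
Proof. unfold Lf. rewrite dot_sub. ring. Qed.

Section Core.
Variables (d m : nat) (v : nat -> vec).
Hypotheses (Hd : (3 <= d)%nat) (Hm : (3 <= m)%nat)
  (Hin : forall i, (i < d + m)%nat -> inRd (S (S d)) (v i))
  (H1 : forall i, (i < d + m)%nat -> Lf d (v i) (v i) = 1)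
  (H2 : forall i j, (i < d)%nat -> (j < d + m)%nat -> i <> j -> Lf d (v i) (v j) = -1)
  (H3 : forall i j, (i < d + m)%nat -> (j < d + m)%nat -> i <> j -> Lf d (v i) (v j) <= -1).

Let Dr := INR d.
Lemma HDr : 3 <= Dr.
Proof. unfold Dr. replace 3 with (INR 3) by (simpl; ring). apply le_INR; auto. Qed.

Definition sv : vec := fun k => sumR d (fun i => v i k).
Let al := / (Dr - 2).
Definition qv (j : nat) : vec := fun k => v (d + j) k - al * sv k.
Let dl := Dr / (Dr - 2).
Let rho := 1 + dl.

Lemma Lvs_lt l : (l < d)%nat -> Lf d sv (v l) = 2 - Dr.
Proof.
  intros Hl. unfold sv. rewrite Lf_sum.
  rewrite (sumR_ext d _ (fun t => 1 * (if (t =? l)%nat then 1 else -1))).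
  - rewrite sum_sign by auto. rewrite sum_const. unfold Dr. ring.
  - intros t Ht. destruct (Nat.eqb_spec t l) as [->|Hne]. rewrite H1 by lia; ring. rewrite H2 by lia; ring.
Qed.

Lemma Lvs_ge j : (j < m)%nat -> Lf d sv (v (d + j)) = - Dr.
Proof.
  intros Hj. unfold sv. rewrite Lf_sum.
  rewrite (sumR_ext d _ (fun _ => -1)). rewrite sum_const. unfold Dr; ring.
  intros t Ht. apply H2; lia.
Qed.

Lemma Lss : Lf d sv sv = Dr * (2 - Dr).
Proof.
  unfold sv at 1. rewrite Lf_sum. rewrite (sumR_ext d _ (fun _ => 2 - Dr)). rewrite sum_const. unfold Dr; ring.
  intros t Ht. rewrite Lf_sym. apply Lvs_lt; auto.
Qed.

Lemma Hal : al * (Dr - 2) = 1.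
Proof. unfold al. pose proof HDr. field. lra. Qed.

Lemma Lqv j l : (j < m)%nat -> (l < d)%nat -> Lf d (qv j) (v l) = 0.
Proof.
  intros Hj Hl. unfold qv. rewrite Lf_sub, Lf_scal, Lvs_lt by auto. rewrite (Lf_sym d (v (d + j))), H2 by lia.
  pose proof Hal. lra.
Qed.

Lemma Lqs j : (j < m)%nat -> Lf d (qv j) sv = 0.
Proof.
  intros Hj. rewrite Lf_sym. unfold sv at 1. rewrite Lf_sum. apply sumR_zero. intros i Hi.
  rewrite Lf_sym. apply Lqv; auto.
Qed.

Lemma Lqq i j : (i < m)%nat -> (j < m)%nat -> Lf d (qv i) (qv j) = Lf d (v (d + i)) (v (d + j)) + dl.
Proof.
  intros Hi Hj. unfold qv at 1. rewrite Lf_sub, Lf_scal, (Lf_sym d sv (qv j)), Lqs by auto.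
  rewrite Lf_sym. unfold qv. rewrite Lf_sub, Lf_scal, Lvs_ge by auto. rewrite Lf_sym.
  unfold dl. pose proof HDr. unfold al in *. field. lra.
Qed.

Lemma inRd_q j : (j < m)%nat -> inRd (S (S d)) (qv j).
Proof.
  intros Hj k Hk. unfold qv. rewrite (Hin (d + j)) by (auto; lia).
  unfold sv. rewrite (sumR_zero d (fun i => v i k)). ring. intros i Hi. apply Hin; auto; lia.
Qed.

Lemma trip i j l : (i < m)%nat -> (j < m)%nat -> (l < m)%nat ->
  exists la mu nu, ~ (la = 0 /\ mu = 0 /\ nu = 0) /\ forall k, la * qv i k + mu * qv j k + nu * qv l k = 0.
Proof.
  intros Hi Hj Hl.
  set (F := fun t => if (t <? d)%nat then v t else if (t =? d)%nat then qv i else if (t =? S d)%nat then qv j else qv l).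
  assert (HF : forall t, (t <= S (S d))%nat -> inRd (S (S d)) (F t)).
  { intros t Ht. unfold F. destruct (Nat.ltb_spec t d). apply Hin; lia.
    destruct (t =? d)%nat. apply inRd_q; auto. destruct (t =? S d)%nat; apply inRd_q; auto. }
  destruct (dep (S (S d)) F HF) as [a [[i0 [Hi0 Hai0]] Hs]].
  assert (FE : forall k, sumR (S (S (S d))) (fun t => a t * F t k) =
     sumR d (fun t => a t * v t k) + (a d * qv i k + (a (S d) * qv j k + a (S (S d)) * qv l k))).
  { intros k. simpl sumR. rewrite (sumR_ext d _ (fun t => a t * v t k)).
    - unfold F. rewrite Nat.ltb_irrefl, Nat.eqb_refl.
      replace (S d <? d)%nat with false by (symmetry; apply Nat.ltb_ge; lia).
      replace (S d =? d)%nat with false by (symmetry; apply Nat.eqb_neq; lia).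
      replace (S (S d) <? d)%nat with false by (symmetry; apply Nat.ltb_ge; lia).
      replace (S (S d) =? d)%nat with false by (symmetry; apply Nat.eqb_neq; lia).
      replace (S (S d) =? S d)%nat with false by (symmetry; apply Nat.eqb_neq; lia).
      rewrite Nat.eqb_refl. ring.
    - intros t Ht. unfold F. replace (t <? d)%nat with true by (symmetry; apply Nat.ltb_lt; lia). auto. }
  set (W := fun k => sumR d (fun t => a t * v t k) + (a d * qv i k + (a (S d) * qv j k + a (S (S d)) * qv l k))).
  assert (HW : forall z, Lf d W z = 0) by (intros z; apply Lf_zero; intros k; unfold W; rewrite <- FE; auto).
  assert (Hap : forall p, (p < d)%nat -> 2 * a p - sumR d a = 0).
  { intros p Hp. specialize (HW (v p)). unfold W in HW.
    rewrite !Lf_add, !Lf_scal, !Lqv in HW by auto.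
    rewrite (Lf_sum d d (fun t k => a t * v t k)) in HW.
    rewrite (sumR_ext d _ (fun t => a t * (if (t =? p)%nat then 1 else -1))) in HW.
    - rewrite sum_sign in HW by auto. lra.
    - intros t Ht. rewrite Lf_scal. destruct (Nat.eqb_spec t p) as [->|Hne].
      rewrite H1 by lia; ring. rewrite H2 by lia; ring. }
  assert (HS : sumR d a = 0).
  { assert (sumR d a = sumR d (fun _ => sumR d a / 2)).
    { apply sumR_ext. intros p Hp. specialize (Hap p Hp). lra. }
    rewrite sum_const in H. fold Dr in H. pose proof HDr.
    assert (sumR d a * (Dr / 2 - 1) = 0) by lra.
    apply Rmult_integral in H4. destruct H4; [auto|lra]. }
  assert (Hz : forall p, (p < d)%nat -> a p = 0) by (intros p Hp; specialize (Hap p Hp); lra).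
  exists (a d), (a (S d)), (a (S (S d))). split.
  - intros [Z1 [Z2 Z3]]. apply Hai0.
    destruct (Nat.ltb_spec i0 d). apply Hz; auto.
    assert (Hc : (i0 = d \/ i0 = S d \/ i0 = S (S d))%nat) by lia. destruct Hc as [ -> | [ -> | -> ] ]; auto.
  - intros k. specialize (Hs k). rewrite FE in Hs.
    rewrite (sumR_zero d (fun t => a t * v t k)) in Hs. lra. intros t Ht. rewrite Hz; auto; ring.
Qed.

Lemma trip_gram i j l la mu nu z : (forall k, la * qv i k + mu * qv j k + nu * qv l k = 0) ->
  la * Lf d (qv i) z + mu * Lf d (qv j) z + nu * Lf d (qv l) z = 0.
Proof.
  intros H. rewrite <- !Lf_scal, <- !Lf_add. apply Lf_zero. intros k. rewrite <- (H k). ring.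
Qed.


Definition cc i j := Lf d (qv i) (qv j) / rho.

Lemma Hrho : 1 < rho /\ rho = (2 * Dr - 2) / (Dr - 2).
Proof. unfold rho, dl. pose proof HDr. split. assert (0 < Dr / (Dr - 2)) by (apply Rdiv_lt_0_compat; lra). lra. field; lra. Qed.

Lemma Lf_q_rho i j : (i < m)%nat -> (j < m)%nat -> Lf d (qv i) (qv j) = rho * cc i j.
Proof. intros. unfold cc. destruct Hrho. field. lra. Qed.

Lemma cc_diag i : (i < m)%nat -> cc i i = 1.
Proof. intros Hi. unfold cc. rewrite Lqq, H1 by lia. unfold rho. destruct Hrho. unfold rho in H. field. lra. Qed.

Lemma cc_sym i j : cc i j = cc j i.
Proof. unfold cc. rewrite Lf_sym. auto. Qed.

Lemma cc_le i j : (i < m)%nat -> (j < m)%nat -> i <> j -> cc i j <= 1 / (Dr - 1).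
Proof.
  intros Hi Hj Hij. unfold cc. rewrite Lqq by auto. pose proof (H3 (d + i) (d + j) ltac:(lia) ltac:(lia) ltac:(lia)).
  destruct Hrho as [Hr1 Hr2]. pose proof HDr.
  apply (Rmult_le_reg_r rho); [lra|]. replace ((Lf d (v (d + i)) (v (d + j)) + dl) / rho * rho) with (Lf d (v (d + i)) (v (d + j)) + dl) by (field; lra).
  rewrite Hr2. unfold dl. replace (1 / (Dr - 1) * ((2 * Dr - 2) / (Dr - 2))) with (-1 + Dr / (Dr - 2)) by (field; lra). lra.
Qed.

Lemma cc_abs i j : (i < m)%nat -> (j < m)%nat -> -1 <= cc i j <= 1.
Proof.
  intros Hi Hj. pose proof HDr. destruct Hrho as [Hr1 Hr2].
  assert (Hss : Lf d sv sv < 0) by (rewrite Lss; nra).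
  assert (P1 : 0 <= Lf d (fun k => qv i k + qv j k) (fun k => qv i k + qv j k)).
  { apply (Lf_pos d _ sv); auto. rewrite Lf_add, !Lqs by auto. ring. }
  assert (P2 : 0 <= Lf d (fun k => qv i k - qv j k) (fun k => qv i k - qv j k)).
  { apply (Lf_pos d _ sv); auto. rewrite Lf_sub, !Lqs by auto. ring. }
  rewrite Lf_add, (Lf_sym d (qv i)), (Lf_sym d (qv j)), !Lf_add in P1.
  rewrite Lf_sub, (Lf_sym d (qv i)), (Lf_sym d (qv j)), !Lf_sub in P2.
  rewrite !Lf_q_rho in P1, P2 by auto. rewrite !cc_diag in P1, P2 by auto.
  rewrite (cc_sym j i) in P1, P2. split; nra.
Qed.

Lemma trip_cc i j l la mu nu z : (z < m)%nat -> (i < m)%nat -> (j < m)%nat -> (l < m)%nat ->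
  (forall k, la * qv i k + mu * qv j k + nu * qv l k = 0) ->
  la * cc i z + mu * cc j z + nu * cc l z = 0.
Proof.
  intros Hz Hi Hj Hl H. pose proof (trip_gram i j l la mu nu (qv z) H).
  rewrite !Lf_q_rho in H0 by auto. destruct Hrho. nra.
Qed.

Lemma exists_s : exists s, (s < m)%nat /\ s <> 0%nat /\ -1 < cc 0 s < 1.
Proof.
  pose proof HDr.
  assert (Hlt : forall j, (j < m)%nat -> j <> 0%nat -> cc 0 j < 1).
  { intros j Hj Hj0. pose proof (cc_le 0 j ltac:(lia) Hj ltac:(lia)).
    assert (1 / (Dr - 1) < 1) by (apply (Rmult_lt_reg_r (Dr - 1)); [lra|]; field_simplify; lra). lra. }
  destruct (Rlt_or_le (-1) (cc 0 1)) as [h1|h1].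
  { exists 1%nat. split; [lia|split; [lia|]]. split; [auto| apply Hlt; lia]. }
  destruct (Rlt_or_le (-1) (cc 0 2)) as [h2|h2].
  { exists 2%nat. split; [lia|split; [lia|]]. split; [auto| apply Hlt; lia]. }
  exfalso.
  pose proof (cc_abs 0 1 ltac:(lia) ltac:(lia)). pose proof (cc_abs 0 2 ltac:(lia) ltac:(lia)).
  assert (E1 : cc 0 1 = -1) by lra. assert (E2 : cc 0 2 = -1) by lra.
  pose proof (cc_le 1 2 ltac:(lia) ltac:(lia) ltac:(lia)).
  assert (1 / (Dr - 1) < 1) by (apply (Rmult_lt_reg_r (Dr - 1)); [lra|]; field_simplify; lra).
  destruct (trip 0 1 2 ltac:(lia) ltac:(lia) ltac:(lia)) as [la [mu [nu [Hnz Hrel]]]].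
  pose proof (trip_cc 0 1 2 la mu nu 0 ltac:(lia) ltac:(lia) ltac:(lia) ltac:(lia) Hrel) as G0.
  pose proof (trip_cc 0 1 2 la mu nu 1 ltac:(lia) ltac:(lia) ltac:(lia) ltac:(lia) Hrel) as G1.
  pose proof (trip_cc 0 1 2 la mu nu 2 ltac:(lia) ltac:(lia) ltac:(lia) ltac:(lia) Hrel) as G2.
  rewrite !cc_diag in G0, G1, G2 by lia.
  rewrite (cc_sym 1 0), (cc_sym 2 0), E1, E2 in G0. rewrite E1 in G1. rewrite E2 in G2. rewrite (cc_sym 2 1) in G1.
  set (t := cc 1 2) in *.
  assert (Hnu : (t - 1) * nu = 0) by lra. assert (Hmu : (t - 1) * mu = 0) by lra.
  apply Rmult_integral in Hnu. apply Rmult_integral in Hmu.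
  apply Hnz. destruct Hnu as [|Hnu]; [lra|]. destruct Hmu as [|Hmu]; [lra|]. repeat split; lra.
Qed.

Lemma span s j : (s < m)%nat -> s <> 0%nat -> -1 < cc 0 s < 1 -> (j < m)%nat ->
  exists be ga, forall k, qv j k = be * qv 0 k + ga * qv s k.
Proof.
  intros Hs Hs0 [Hk1 Hk2] Hj.
  destruct (trip 0 s j ltac:(lia) Hs Hj) as [la [mu [nu [Hnz Hrel]]]].
  destruct (Req_dec nu 0) as [Hnu|Hnu].
  - exfalso. subst nu.
    pose proof (trip_cc 0 s j la mu 0 0 ltac:(lia) ltac:(lia) Hs Hj Hrel) as G0.
    pose proof (trip_cc 0 s j la mu 0 s Hs ltac:(lia) Hs Hj Hrel) as G1.
    rewrite !cc_diag in G0, G1 by lia. rewrite (cc_sym s 0) in G0.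
    set (kk := cc 0 s) in *.
    assert (la * (1 - kk * kk) = 0) by nra. apply Rmult_integral in H. destruct H as [Hla|]; [|nra].
    subst la. assert (mu = 0) by lra. apply Hnz; repeat split; lra.
  - exists (- la / nu), (- mu / nu). intros k. specialize (Hrel k).
    apply (Rmult_eq_reg_l nu); auto. field_simplify; auto. lra.
Qed.

Lemma core : exists x y : nat -> R, x 0%nat = 1 /\ y 0%nat = 0 /\
  (forall i, (i < m)%nat -> x i * x i + y i * y i = 1) /\
  (forall i j, (i < m)%nat -> (j < m)%nat ->
     Lf d (v (d + i)) (v (d + j)) = (1 + INR d / (INR d - 2)) * (x i * x j + y i * y j) - INR d / (INR d - 2)).
Proof.
  destruct exists_s as [s [Hs [Hs0 Hk]]].
  set (kk := cc 0 s) in *.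
  assert (Hsg : 0 < 1 - kk * kk) by nra.
  set (sg := sqrt (1 - kk * kk)).
  assert (Hsg2 : sg * sg = 1 - kk * kk) by (apply sqrt_sqrt; lra).
  assert (Hsgp : 0 < sg) by (apply sqrt_lt_R0; lra).
  set (x := fun j => cc 0 j). set (y := fun j => (cc s j - kk * cc 0 j) / sg).
  assert (Key : forall i j, (i < m)%nat -> (j < m)%nat -> cc i j = x i * x j + y i * y j).
  { intros i j Hi Hj.
    destruct (span s i Hs Hs0 Hk Hi) as [bi [gi Hbi]].
    destruct (span s j Hs Hs0 Hk Hj) as [bj [gj Hbj]].
    assert (Ei : forall z, (z < m)%nat -> cc i z = bi * cc 0 z + gi * cc s z).
    { intros z Hz. pose proof (trip_cc 0 s i bi gi (-1) z Hz ltac:(lia) Hs Hi) as T.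
      assert (forall k, bi * qv 0 k + gi * qv s k + -1 * qv i k = 0) by (intros k; rewrite Hbi; ring).
      specialize (T H). lra. }
    assert (Ej : forall z, (z < m)%nat -> cc j z = bj * cc 0 z + gj * cc s z).
    { intros z Hz. pose proof (trip_cc 0 s j bj gj (-1) z Hz ltac:(lia) Hs Hj) as T.
      assert (forall k, bj * qv 0 k + gj * qv s k + -1 * qv j k = 0) by (intros k; rewrite Hbj; ring).
      specialize (T H). lra. }
    pose proof (Ei j Hj) as A1.
    pose proof (Ej 0%nat ltac:(lia)) as A2. pose proof (Ej s Hs) as A3.
    pose proof (Ei 0%nat ltac:(lia)) as A4. pose proof (Ei s Hs) as A5.
    rewrite !cc_diag in A2, A3, A4, A5 by lia.
    rewrite (cc_sym s 0) in A2, A4. fold kk in A2, A4.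
    unfold x, y. rewrite (cc_sym 0 i), (cc_sym s i), (cc_sym 0 j), (cc_sym s j), A2, A3, A4, A5, A1.
    rewrite (cc_sym 0 j), (cc_sym s j), A2, A3.
    change (cc 0 s) with kk.
    assert (Y : forall b g, (b * kk + g * 1 - kk * (b * 1 + g * kk)) / sg = g * sg).
    { intros b g. unfold Rdiv. replace (b * kk + g * 1 - kk * (b * 1 + g * kk)) with (g * (sg * sg)) by (rewrite Hsg2; ring). field. lra. }
    rewrite !Y. replace (gi * sg * (gj * sg)) with (gi * gj * (sg * sg)) by ring. rewrite Hsg2. ring. }
  exists x, y. split; [|split; [|split]].
  - unfold x. apply cc_diag; lia.
  - unfold y. rewrite cc_diag by lia. rewrite (cc_sym s 0). fold kk. unfold Rdiv. ring.
  - intros i Hi. rewrite <- Key by auto. apply cc_diag; auto.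
  - intros i j Hi Hj. rewrite <- Key by auto. unfold cc. rewrite Lqq by auto. fold Dr. unfold rho, dl.
    destruct Hrho. unfold rho, dl in *. pose proof HDr. field. split; lra.
Qed.

End Core.

Definition fc (c p : R) : R := (p + 1) * (p + 1 / 2) * (p + 1 / 2) * (p - c).

Definition feat (t : nat) (x y : R) : R :=
  match t with
  | 0 => x | 1 => y
  | 2 => x * x - y * y | 3 => 2 * x * y
  | 4 => x * x * x - 3 * x * y * y | 5 => 3 * x * x * y - y * y * y
  | 6 => x * x * x * x - 6 * x * x * y * y + y * y * y * y | _ => 4 * x * x * x * y - 4 * x * y * y * y
  end.
Definition wt (c : R) (t : nat) : R :=
  match t with
  | 0 | 1 => 7 / 4 - 2 * c | 2 | 3 => 9 / 8 - c | 4 | 5 => (2 - c) / 4 | _ => 1 / 8 end.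
Definition a0 (c : R) := 1 - 5 * c / 4.

Lemma pair_feat c x1 y1 x2 y2 : x1 * x1 + y1 * y1 = 1 -> x2 * x2 + y2 * y2 = 1 ->
  fc c (x1 * x2 + y1 * y2) = a0 c + sumR 8 (fun t => wt c t * (feat t x1 y1 * feat t x2 y2)).
Proof.
  intros U1 U2. simpl sumR. unfold feat, wt, a0, fc.
  set (p := x1 * x2 + y1 * y2).
  assert (h2 : (x1 * x1 - y1 * y1) * (x2 * x2 - y2 * y2) + 2 * x1 * y1 * (2 * x2 * y2) = 2 * p * p - (x1 * x1 + y1 * y1) * (x2 * x2 + y2 * y2)) by (unfold p; ring).
  assert (h3 : (x1 * x1 * x1 - 3 * x1 * y1 * y1) * (x2 * x2 * x2 - 3 * x2 * y2 * y2) + (3 * x1 * x1 * y1 - y1 * y1 * y1) * (3 * x2 * x2 * y2 - y2 * y2 * y2)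
     = 4 * p * p * p - 3 * p * ((x1 * x1 + y1 * y1) * (x2 * x2 + y2 * y2))) by (unfold p; ring).
  assert (h4 : (x1 * x1 * x1 * x1 - 6 * x1 * x1 * y1 * y1 + y1 * y1 * y1 * y1) * (x2 * x2 * x2 * x2 - 6 * x2 * x2 * y2 * y2 + y2 * y2 * y2 * y2)
     + (4 * x1 * x1 * x1 * y1 - 4 * x1 * y1 * y1 * y1) * (4 * x2 * x2 * x2 * y2 - 4 * x2 * y2 * y2 * y2)
     = 8 * p * p * p * p - 8 * p * p * ((x1 * x1 + y1 * y1) * (x2 * x2 + y2 * y2)) + ((x1 * x1 + y1 * y1) * (x2 * x2 + y2 * y2)) ^ 2) by (unfold p; ring).
  rewrite U1, U2 in h2, h3, h4.
  assert (h1 : x1 * x2 + y1 * y2 = p) by reflexivity.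
  transitivity (1 - 5 * c / 4 + (7 / 4 - 2 * c) * p + (9 / 8 - c) * (2 * p * p - 1 * 1)
     + (2 - c) / 4 * (4 * p * p * p - 3 * p * (1 * 1)) + 1 / 8 * (8 * p * p * p * p - 8 * p * p * (1 * 1) + (1 * 1) ^ 2)).
  - field.
  - rewrite <- h2, <- h3, <- h4. unfold p. ring.
Qed.

Lemma sumR_swap n k (G : nat -> nat -> R) : sumR n (fun i => sumR k (fun t => G i t)) = sumR k (fun t => sumR n (fun i => G i t)).
Proof.
  induction n; simpl.
  - symmetry. apply sumR_zero; auto.
  - rewrite IHn. rewrite <- sumR_plus. auto.
Qed.

Lemma sumR_const' n a : sumR n (fun _ => a) = INR n * a.
Proof. induction n; simpl sumR; [simpl; ring|]. rewrite IHn, S_INR. ring. Qed.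

Lemma sumR_nonneg n f : (forall i, (i < n)%nat -> 0 <= f i) -> 0 <= sumR n f.
Proof. intros H. replace 0 with (sumR n (fun _ => 0)) by (apply sumR_zero; auto). apply sumR_le; auto. Qed.

Section LP.
Variables (m : nat) (c : R) (x y : nat -> R).
Hypotheses (Hc : 0 <= c <= 1 / 2) (U : forall i, (i < m)%nat -> x i * x i + y i * y i = 1)
  (P : forall i j, (i < m)%nat -> (j < m)%nat -> i <> j -> x i * x j + y i * y j <= c).
Let p i j := x i * x j + y i * y j.

Lemma total_ge : INR m * INR m * a0 c <= sumR m (fun i => sumR m (fun j => fc c (p i j))).
Proof.
  rewrite (sumR_ext m _ (fun i => sumR m (fun j => a0 c + sumR 8 (fun t => wt c t * (feat t (x i) (y i) * feat t (x j) (y j)))))).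
  2: { intros i Hi. apply sumR_ext. intros j Hj. apply pair_feat; auto. }
  rewrite (sumR_ext m _ (fun i => INR m * a0 c + sumR 8 (fun t => wt c t * (feat t (x i) (y i) * sumR m (fun j => feat t (x j) (y j)))))).
  2: { intros i Hi. rewrite sumR_plus, sumR_const'. f_equal. rewrite sumR_swap. apply sumR_ext; intros t Ht.
       rewrite <- sumR_scal, <- sumR_scal. apply sumR_ext; intros; ring. }
  rewrite sumR_plus, sumR_const', sumR_swap.
  assert (0 <= sumR 8 (fun t => sumR m (fun i => wt c t * (feat t (x i) (y i) * sumR m (fun j => feat t (x j) (y j)))))).
  { apply sumR_nonneg. intros t Ht.
    rewrite (sumR_ext m _ (fun i => (wt c t * sumR m (fun j => feat t (x j) (y j))) * feat t (x i) (y i))) by (intros; ring).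
    rewrite sumR_scal. assert (0 <= wt c t) by (unfold wt; destruct t as [|[|[|[|[|[|[|]]]]]]]; lra). nra. }
  lra.
Qed.

Lemma p_ge i j : (i < m)%nat -> (j < m)%nat -> -1 <= p i j.
Proof. intros. unfold p. pose proof (U i H). pose proof (U j H0).
  assert (0 <= (x i + x j) * (x i + x j) + (y i + y j) * (y i + y j)) by (apply Rplus_le_le_0_compat; apply Rle_0_sqr).
  replace ((x i + x j) * (x i + x j) + (y i + y j) * (y i + y j)) with ((x i * x i + y i * y i) + (x j * x j + y j * y j) + 2 * (x i * x j + y i * y j)) in H3 by ring.
  lra. Qed.

Lemma f_nonpos i j : (i < m)%nat -> (j < m)%nat -> i <> j -> fc c (p i j) <= 0.
Proof.
  intros Hi Hj Hij. pose proof (p_ge i j Hi Hj). pose proof (P i j Hi Hj Hij). fold (p i j) in H0.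
  set (q := p i j) in *. replace (fc c q) with ((q+1) * ((q+1/2)*(q+1/2)) * (q-c)) by (unfold fc; ring).
  assert (0 <= (q+1)*((q+1/2)*(q+1/2))) by (apply Rmult_le_pos; [lra | apply Rle_0_sqr]).
  assert (0 <= (q+1)*((q+1/2)*(q+1/2)) * (c - q)) by (apply Rmult_le_pos; lra). lra.
Qed.

Lemma f_diag i : (i < m)%nat -> fc c (p i i) = 9 / 2 * (1 - c).
Proof. intros Hi. unfold p. rewrite U by auto. unfold fc. field. Qed.

Lemma row_le i : (i < m)%nat -> sumR m (fun j => fc c (p i j)) <= 9 / 2 * (1 - c).
Proof. intros Hi. rewrite <- (f_diag i Hi). apply (sumR_le_one m (fun j => fc c (p i j)) i); auto. intros j Hj Hne. apply f_nonpos; auto. Qed.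

Lemma lp_bound : INR m * a0 c <= 9 / 2 * (1 - c).
Proof.
  pose proof total_ge.
  assert (sumR m (fun i => sumR m (fun j => fc c (p i j))) <= INR m * (9 / 2 * (1 - c))).
  { rewrite <- sumR_const'. apply sumR_le. intros; apply row_le; auto. }
  destruct m as [|m']. simpl. unfold a0. lra.
  assert (0 < INR (S m')) by (apply lt_0_INR; lia). nra.
Qed.

Lemma lp_eq i0 j0 : (i0 < m)%nat -> (j0 < m)%nat -> i0 <> j0 ->
  INR m * INR m * a0 c - INR m * (9 / 2 * (1 - c)) <= fc c (p i0 j0).
Proof.
  intros Hi Hj Hij. pose proof total_ge.
  assert (sumR m (fun i => sumR m (fun j => fc c (p i j)) - 9 / 2 * (1 - c)) <= sumR m (fun j => fc c (p i0 j)) - 9 / 2 * (1 - c)).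
  { apply (sumR_le_one m (fun i => sumR m (fun j => fc c (p i j)) - 9 / 2 * (1 - c)) i0); auto.
    intros i Hi' Hne. pose proof (row_le i Hi'). lra. }
  rewrite (sumR_ext m _ (fun i => sumR m (fun j => fc c (p i j)) + (-1) * (9 / 2 * (1 - c)))) in H0 by (intros; ring).
  rewrite sumR_plus, sumR_const' in H0.
  assert (sumR m (fun j => fc c (p i0 j)) <= fc c (p i0 i0) + fc c (p i0 j0)).
  { apply (sumR_le_two m (fun j => fc c (p i0 j)) i0 j0); auto. intros k Hk H1 H2. apply f_nonpos; auto. }
  rewrite f_diag in H1 by auto. lra.
Qed.
End LP.

Lemma inRd_lv d B : inRd (S (S d)) (lv d B).
Proof.
  intros k Hk. assert (E : forall p X Y, mk4 d p X Y k = 0).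
  { intros. unfold mk4. replace (k <? d)%nat with false by (symmetry; apply Nat.ltb_ge; lia).
    replace (k =? d)%nat with false by (symmetry; apply Nat.eqb_neq; lia).
    replace (k =? S d)%nat with false by (symmetry; apply Nat.eqb_neq; lia). auto. }
  destruct B; simpl; unfold negv, ballv, hsv; rewrite E; ring.
Qed.

Lemma compl_third d B1 B2 B3 : compl d B1 B2 -> Lf d (lv d B3) (lv d B1) <= -1 -> Lf d (lv d B3) (lv d B2) <= -1 -> False.
Proof.
  intros Hc H1 H2. replace (lv d B2) with (negv (lv d B1)) in H2 by (apply functional_extensionality; intros k; rewrite Hc; auto).
  rewrite Lf_negv_r in H2. lra.
Qed.

Lemma bridge d m G B : (3 <= d)%nat -> (3 <= m)%nat -> ball_packing d (d + m) B ->
  (forall i j, (i < d + m)%nat -> (j < d + m)%nat -> i <> j -> (join_K d G i j <-> tangent d (B i) (B j))) ->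
  exists x y : nat -> R, x 0%nat = 1 /\ y 0%nat = 0 /\
    (forall i, (i < m)%nat -> x i * x i + y i * y i = 1) /\
    (forall i j, (i < m)%nat -> (j < m)%nat -> i <> j -> x i * x j + y i * y j <= 1 / (INR d - 1)) /\
    (forall i j, (i < m)%nat -> (j < m)%nat -> i <> j -> (G i j <-> x i * x j + y i * y j = 1 / (INR d - 1))).
Proof.
  intros Hd Hm [HV HD] HG.
  set (v := fun i => lv d (B i)).
  assert (PP : forall i j, (i < d + m)%nat -> (j < d + m)%nat -> i <> j -> pairP d (B i) (B j)).
  { intros i j Hi Hj Hij. apply pair_L; auto; try lia. apply HD; auto. }
  assert (L1 : forall i j, (i < d + m)%nat -> (j < d + m)%nat -> i <> j -> Lf d (v i) (v j) <= -1).
  { intros i j Hi Hj Hij. apply (PP i j Hi Hj Hij). }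
  assert (Teq : forall i j, (i < d + m)%nat -> (j < d + m)%nat -> i <> j -> (tangent d (B i) (B j) <-> Lf d (v i) (v j) = -1)).
  { intros i j Hi Hj Hij. destruct (PP i j Hi Hj Hij) as [_ [P2 P3]]. split; auto.
    intros HL. apply P3; auto. intros Hc.
    destruct (classic (exists t, (t < d + m)%nat /\ t <> i /\ t <> j)) as [[t [Ht [Hti Htj]]]|Hno].
    - apply (compl_third d (B i) (B j) (B t) Hc); apply L1; auto.
    - apply Hno. destruct (Nat.eq_dec i 0), (Nat.eq_dec j 0).
      + lia.
      + destruct (Nat.eq_dec j 1); [exists 2%nat|exists 1%nat]; lia.
      + destruct (Nat.eq_dec i 1); [exists 2%nat|exists 1%nat]; lia.
      + exists 0%nat; lia. }
  destruct (core d m v Hd Hm) as [x [y [Hx0 [Hy0 [HU HL]]]]].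
  - intros i Hi. apply inRd_lv.
  - intros i Hi. apply Lf_self. apply HV; auto.
  - intros i j Hi Hj Hij. apply (proj1 (Teq i j ltac:(lia) Hj Hij)). apply (proj1 (HG i j ltac:(lia) Hj Hij)). left; auto.
  - auto.
  - pose proof (le_INR 3 d Hd). simpl in H. 
    assert (Ek : forall p, (1 + INR d / (INR d - 2)) * p - INR d / (INR d - 2) <= -1 <-> p <= 1 / (INR d - 1)).
    { intros p. replace (1 + INR d / (INR d - 2)) with ((2 * INR d - 2) / (INR d - 2)) by (field; lra).
      split; intros Hp.
      - apply (Rmult_le_reg_r ((2 * INR d - 2) / (INR d - 2))). apply Rdiv_lt_0_compat; lra.
        replace (1 / (INR d - 1) * ((2 * INR d - 2) / (INR d - 2))) with (-1 + INR d / (INR d - 2)) by (field; lra). lra.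
      - apply (Rmult_le_compat_r ((2 * INR d - 2) / (INR d - 2))) in Hp. 2: left; apply Rdiv_lt_0_compat; lra.
        replace (1 / (INR d - 1) * ((2 * INR d - 2) / (INR d - 2))) with (-1 + INR d / (INR d - 2)) in Hp by (field; lra). lra. }
    assert (Ee : forall p, (1 + INR d / (INR d - 2)) * p - INR d / (INR d - 2) = -1 <-> p = 1 / (INR d - 1)).
    { intros p. split; intros Hp.
      - apply (Rmult_eq_reg_r ((2 * INR d - 2) / (INR d - 2))). 2: { apply Rgt_not_eq, Rdiv_lt_0_compat; lra. }
        replace (1 / (INR d - 1) * ((2 * INR d - 2) / (INR d - 2))) with (-1 + INR d / (INR d - 2)) by (field; lra).
        replace (1 + INR d / (INR d - 2)) with ((2 * INR d - 2) / (INR d - 2)) in Hp by (field; lra). lra.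
      - rewrite Hp. field. lra. }
    exists x, y. split; [auto|split; [auto|split; [auto|split]]].
    + intros i j Hi Hj Hij. apply Ek. rewrite <- HL by auto. apply L1; lia.
    + intros i j Hi Hj Hij. rewrite <- Ee, <- HL by auto. rewrite <- Teq by lia.
      rewrite <- HG by lia. unfold join_K. replace (d + i - d)%nat with i by lia. replace (d + j - d)%nat with j by lia.
      split; [auto|]. intros [|[|]]; auto; lia.
Qed.

Lemma no_d5 d G : (5 <= d)%nat -> ~ ball_packable d (d + 5) (join_K d G).
Proof.
  intros Hd [B [HP HG]].
  destruct (bridge d 5 G B ltac:(lia) ltac:(lia) HP HG) as [x [y [_ [_ [HU [HL _]]]]]].
  pose proof (le_INR 5 d Hd). simpl in H.
  assert (Hc : 1 / (INR d - 1) <= 1 / 4).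
  { apply (Rmult_le_reg_r (4 * (INR d - 1))). lra. field_simplify; lra. }
  assert (P : forall i j, (i < 5)%nat -> (j < 5)%nat -> i <> j -> x i * x j + y i * y j <= 1 / 4).
  { intros. pose proof (HL i j H0 H1 H2). lra. }
  pose proof (lp_bound 5 (1/4) x y ltac:(lra) HU P). unfold a0 in H0. simpl in H0. lra.
Qed.

Lemma no_d4 G : ~ ball_packable 4 (4 + 6) (join_K 4 G).
Proof.
  intros [B [HP HG]].
  destruct (bridge 4 6 G B ltac:(lia) ltac:(lia) HP HG) as [x [y [_ [_ [HU [HL _]]]]]].
  assert (P : forall i j, (i < 6)%nat -> (j < 6)%nat -> i <> j -> x i * x j + y i * y j <= 1 / 3).
  { intros. pose proof (HL i j H H0 H1). simpl INR in H2. replace (1 / (1 + 1 + 1 + 1 - 1)) with (1/3) in H2 by field. lra. }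
  pose proof (lp_bound 6 (1/3) x y ltac:(lra) HU P). unfold a0 in H. simpl in H. lra.
Qed.

Definition s3 := sqrt 3 / 2.
Lemma s3_sq : s3 * s3 = 3 / 4.
Proof. unfold s3. replace (sqrt 3 / 2 * (sqrt 3 / 2)) with (sqrt 3 * sqrt 3 / 4) by field. rewrite sqrt_sqrt; lra. Qed.
Lemma s3_pos : 0 < s3.
Proof. unfold s3. apply Rdiv_lt_0_compat; [apply sqrt_lt_R0; lra|lra]. Qed.

Definition hx (k : nat) : R := match k with 0 => 1 | 1 => 1/2 | 2 => -1/2 | 3 => -1 | 4 => -1/2 | _ => 1/2 end.
Definition hy (k : nat) : R := match k with 0 => 0 | 1 => s3 | 2 => s3 | 3 => 0 | 4 => - s3 | _ => - s3 end.

Lemma hex_C6 a b : (a < 6)%nat -> (b < 6)%nat -> (hx a * hx b + hy a * hy b = 1 / 2 <-> C6 a b).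
Proof.
  intros Ha Hb. pose proof s3_sq. pose proof s3_pos.
  destruct a as [|[|[|[|[|[|a]]]]]]; try lia; destruct b as [|[|[|[|[|[|b]]]]]]; try lia;
  unfold hx, hy, C6; simpl; split; intros; try lia; try nra; try (left; reflexivity); try (right; reflexivity).
Qed.

Lemma hex_unit a : hx a * hx a + hy a * hy a = 1.
Proof. pose proof s3_sq. destruct a as [|[|[|[|[|[|a]]]]]]; unfold hx, hy; nra. Qed.

Lemma C6_irrefl a : (a < 6)%nat -> ~ C6 a a.
Proof. intros Ha. destruct a as [|[|[|[|[|[|a]]]]]]; try lia; unfold C6; simpl; lia. Qed.

Definition kslot (x y : R) : nat :=
  if Rlt_dec (3/4) x then 0%nat
  else if Rlt_dec 0 x then (if Rlt_dec 0 y then 1%nat else 5%nat)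
  else if Rlt_dec (-3/4) x then (if Rlt_dec 0 y then 2%nat else 4%nat)
  else 3%nat.

Lemma kslot_ok x y : x * x + y * y = 1 -> (x = 1 \/ x = 1/2 \/ x = -1/2 \/ x = -1) ->
  (kslot x y < 6)%nat /\ hx (kslot x y) = x /\ hy (kslot x y) = y.
Proof.
  intros U Hx. pose proof s3_sq. pose proof s3_pos. unfold kslot.
  destruct Hx as [ -> | [ -> | [ -> | -> ] ] ].
  - destruct (Rlt_dec (3/4) 1); [|lra]. simpl. split; [lia|split; [lra|nra]].
  - destruct (Rlt_dec (3/4) (1/2)); [lra|]. destruct (Rlt_dec 0 (1/2)); [|lra].
    assert (y * y = s3 * s3) by nra.
    destruct (Rlt_dec 0 y); simpl; (split; [lia|split; [lra|nra]]).
  - destruct (Rlt_dec (3/4) (-1/2)); [lra|]. destruct (Rlt_dec 0 (-1/2)); [lra|]. destruct (Rlt_dec (-3/4) (-1/2)); [|lra].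
    assert (y * y = s3 * s3) by nra.
    destruct (Rlt_dec 0 y); simpl; (split; [lia|split; [lra|nra]]).
  - destruct (Rlt_dec (3/4) (-1)); [lra|]. destruct (Rlt_dec 0 (-1)); [lra|]. destruct (Rlt_dec (-3/4) (-1)); [lra|].
    simpl. split; [lia|split; [lra|nra]].
Qed.

Lemma d3_iso G : simple_graph 6 G -> ball_packable 3 (3 + 6) (join_K 3 G) -> graph_iso 6 G C6.
Proof.
  intros HS [B [HP HG]].
  destruct (bridge 3 6 G B ltac:(lia) ltac:(lia) HP HG) as [x [y [Hx0 [Hy0 [HU [HL HT]]]]]].
  assert (Ec : 1 / (INR 3 - 1) = 1 / 2) by (simpl; field).
  rewrite Ec in HL, HT.
  assert (Z : forall i j, (i < 6)%nat -> (j < 6)%nat -> i <> j -> fc (1/2) (x i * x j + y i * y j) = 0).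
  { intros i j Hi Hj Hij. pose proof (lp_eq 6 (1/2) x y ltac:(lra) HU HL i j Hi Hj Hij).
    pose proof (f_nonpos 6 (1/2) x y HU HL i j Hi Hj Hij). unfold a0 in H. simpl in H. lra. }
  assert (Xv : forall j, (j < 6)%nat -> x j = 1 \/ x j = 1/2 \/ x j = -1/2 \/ x j = -1).
  { intros j Hj. destruct (Nat.eq_dec j 0) as [ -> | Hne]; [left; auto|].
    pose proof (Z 0%nat j ltac:(lia) Hj ltac:(lia)). rewrite Hx0, Hy0 in H.
    replace (1 * x j + 0 * y j) with (x j) in H by ring. unfold fc in H.
    apply Rmult_integral in H. destruct H as [H|H]; [|right; left; lra].
    apply Rmult_integral in H. destruct H as [H|H]; [|right; right; left; lra].
    apply Rmult_integral in H. destruct H as [H|H]; [right; right; right; lra|right; right; left; lra]. }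
  exists (fun j => kslot (x j) (y j)).
  assert (K : forall j, (j < 6)%nat -> (kslot (x j) (y j) < 6)%nat /\ hx (kslot (x j) (y j)) = x j /\ hy (kslot (x j) (y j)) = y j).
  { intros j Hj. apply kslot_ok; auto. }
  split; [|split].
  - intros i Hi. apply K; auto.
  - intros i j Hi Hj Heq. cbv beta in Heq. destruct (Nat.eq_dec i j) as [|Hne]; auto. exfalso.
    pose proof (HL i j Hi Hj Hne). destruct (K i Hi) as [_ [Ki1 Ki2]]. destruct (K j Hj) as [_ [Kj1 Kj2]].
    assert (x i = x j) by (rewrite <- Ki1, <- Kj1, Heq; auto). assert (y i = y j) by (rewrite <- Ki2, <- Kj2, Heq; auto). rewrite H0, H1 in H. rewrite (HU j Hj) in H. lra.
  - intros i j Hi Hj. destruct (Nat.eq_dec i j) as [ -> | Hne].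
    + split; intros H. destruct (HS j j Hj Hj H); tauto. exfalso; apply (C6_irrefl _ (proj1 (K j Hj)) H).
    + rewrite (HT i j Hi Hj Hne). destruct (K i Hi) as [Ki0 [Ki1 Ki2]]. destruct (K j Hj) as [Kj0 [Kj1 Kj2]].
      rewrite <- (hex_C6 _ _ Ki0 Kj0). rewrite Ki1, Ki2, Kj1, Kj2. tauto.
Qed.

Lemma dot3 u v : dot 3 u v = u 0%nat * v 0%nat + u 1%nat * v 1%nat + u 2%nat * v 2%nat.
Proof. simpl. ring. Qed.

Definition ez : vec := fun i => if (i =? 2)%nat then 1 else 0.
Definition mez : vec := fun i => if (i =? 2)%nat then -1 else 0.
Definition Pc (a : nat) : vec := fun i => if (i =? 0)%nat then 2 * hx a else if (i =? 1)%nat then 2 * hy a else 0.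

Lemma in_ez : inRd 3 ez. Proof. intros i Hi. unfold ez. destruct (Nat.eqb_spec i 2); [lia|auto]. Qed.
Lemma in_mez : inRd 3 mez. Proof. intros i Hi. unfold mez. destruct (Nat.eqb_spec i 2); [lia|auto]. Qed.
Lemma in_Pc a : inRd 3 (Pc a). Proof. intros i Hi. unfold Pc. destruct (Nat.eqb_spec i 0); [lia|]. destruct (Nat.eqb_spec i 1); [lia|auto]. Qed.
Lemma in_zv : inRd 3 zv. Proof. intros i Hi; reflexivity. Qed.

Lemma dd_ez : dot 3 ez ez = 1. Proof. rewrite dot3. unfold ez; simpl; ring. Qed.
Lemma dd_mez : dot 3 mez mez = 1. Proof. rewrite dot3. unfold mez; simpl; ring. Qed.
Lemma n_ez : nrm 3 ez = 1. Proof. unfold nrm. rewrite dd_ez. apply sqrt_1. Qed.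
Lemma n_mez : nrm 3 mez = 1. Proof. unfold nrm. rewrite dd_mez. apply sqrt_1. Qed.
Lemma ez_Pc a : dot 3 ez (Pc a) = 0. Proof. rewrite dot3. unfold ez, Pc; simpl; ring. Qed.
Lemma mez_Pc a : dot 3 mez (Pc a) = 0. Proof. rewrite dot3. unfold mez, Pc; simpl; ring. Qed.
Lemma ez_zv : dot 3 ez zv = 0. Proof. rewrite dot3. unfold ez, zv; simpl; ring. Qed.
Lemma mez_zv : dot 3 mez zv = 0. Proof. rewrite dot3. unfold mez, zv; simpl; ring. Qed.
Lemma d_zv_Pc a : dist2 3 zv (Pc a) = 4.
Proof. unfold dist2. rewrite dot3. unfold zv, Pc; simpl. pose proof (hex_unit a). nra. Qed.
Lemma d_Pc a b : dist2 3 (Pc a) (Pc b) = 8 - 8 * (hx a * hx b + hy a * hy b).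
Proof. unfold dist2. rewrite dot3. unfold Pc; simpl. pose proof (hex_unit a). pose proof (hex_unit b). nra. Qed.

Lemma hex_le a b : (a < 6)%nat -> (b < 6)%nat -> a <> b -> hx a * hx b + hy a * hy b <= 1 / 2.
Proof.
  intros Ha Hb Hab. pose proof s3_sq. pose proof s3_pos.
  destruct a as [|[|[|[|[|[|a]]]]]]; try lia; destruct b as [|[|[|[|[|[|b]]]]]]; try lia; unfold hx, hy; nra.
Qed.

Definition H1b := HSpace ez (-1).
Definition H2b := HSpace mez (-1).
Definition C0b := CBall zv 1.

Lemma ap : antipar 3 ez mez.
Proof. unfold antipar. rewrite n_ez, n_mez. intros i Hi. unfold ez, mez. destruct (i =? 2)%nat; field. Qed.

Lemma t01 : Disjoint 3 H1b H2b /\ tangent 3 H1b H2b.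
Proof.
  pose proof dd_ez. pose proof dd_mez. split.
  - apply HH_disj_of; try apply in_ez; try apply in_mez; try lra. all: try apply ap. all: try (rewrite n_ez, n_mez; lra).
  - apply HH_tangent; try lra. all: try apply ap. all: try (rewrite n_ez, n_mez; lra).
Qed.

Lemma tBH c a : inRd 3 c -> inRd 3 a -> dot 3 a a = 1 -> dot 3 a c = 0 ->
  Disjoint 3 (CBall c 1) (HSpace a (-1)) /\ tangent 3 (CBall c 1) (HSpace a (-1)).
Proof.
  intros Hc Ha H1 H2. assert (nrm 3 a = 1) by (unfold nrm; rewrite H1; apply sqrt_1).
  split.
  - apply BH_disj_of; auto; try lra.
  - apply BH_tangent; auto; try lra.
Qed.

Lemma tBB c1 c2 : inRd 3 c1 -> inRd 3 c2 -> 4 <= dist2 3 c1 c2 ->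
  Disjoint 3 (CBall c1 1) (CBall c2 1) /\ (tangent 3 (CBall c1 1) (CBall c2 1) <-> dist2 3 c1 c2 = 4).
Proof.
  intros Hc1 Hc2 H. split.
  - apply BB_disj_of; auto; try lra.
  - split.
    + intros [[x|] [Hm1 [Hm2 _]]]; [|destruct Hm1]. destruct Hm1 as [_ Hm1], Hm2 as [_ Hm2].
      pose proof (BB_common 3 c1 c2 1 1 ltac:(lra) ltac:(lra) x Hm1 Hm2). lra.
    + intros HE. apply BB_tangent; auto; try lra.
Qed.

Lemma Disj_tan_sym d B1 B2 P : Disjoint d B1 B2 /\ (tangent d B1 B2 <-> P) -> Disjoint d B2 B1 /\ (tangent d B2 B1 <-> P).
Proof. intros [H1 H2]. split. apply Disjoint_sym; auto. split; intros H. apply H2, tangent_sym; auto. apply tangent_sym, H2; auto. Qed.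

Section Constr.
Variables (G : nat -> nat -> Prop) (f : nat -> nat).
Hypotheses (Hf1 : forall i, (i < 6)%nat -> (f i < 6)%nat)
  (Hf2 : forall i j, (i < 6)%nat -> (j < 6)%nat -> f i = f j -> i = j)
  (Hf3 : forall i j, (i < 6)%nat -> (j < 6)%nat -> (G i j <-> C6 (f i) (f j))).

Definition Bc (i : nat) : dball :=
  match i with 0 => H1b | 1 => H2b | 2 => C0b | S (S (S j)) => CBall (Pc (f j)) 1 end.

Definition Tc (i j : nat) : Prop := (i < 3)%nat \/ (j < 3)%nat \/ C6 (f (i - 3)) (f (j - 3)).

Lemma good_lt i j : (i < j)%nat -> (j < 9)%nat -> Disjoint 3 (Bc i) (Bc j) /\ (tangent 3 (Bc i) (Bc j) <-> Tc i j).
Proof.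
  intros Hij Hj. unfold Tc.
  assert (Tr : forall A B P : Prop, P -> A /\ B -> A /\ (B <-> P)) by tauto.
  assert (Sw : forall B1 B2, Disjoint 3 B2 B1 /\ tangent 3 B2 B1 -> Disjoint 3 B1 B2 /\ tangent 3 B1 B2).
  { intros B1 B2 [X Y]. split; [apply Disjoint_sym|apply tangent_sym]; auto. }
  destruct i as [|[|[|i]]].
  - destruct j as [|[|[|j]]]; try lia.
    + simpl. apply Tr; [left; lia| apply t01].
    + simpl. apply Tr; [left; lia|]. apply Sw. apply tBH; auto using in_zv, in_ez, dd_ez, ez_zv.
    + simpl. apply Tr; [left; lia|]. apply Sw. apply tBH; auto using in_Pc, in_ez, dd_ez, ez_Pc.
  - destruct j as [|[|[|j]]]; try lia.
    + simpl. apply Tr; [left; lia|]. apply Sw. apply tBH; auto using in_zv, in_mez, dd_mez, mez_zv.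
    + simpl. apply Tr; [left; lia|]. apply Sw. apply tBH; auto using in_Pc, in_mez, dd_mez, mez_Pc.
  - destruct j as [|[|[|j]]]; try lia. simpl. apply Tr; [left; lia|].
    destruct (tBB zv (Pc (f j)) in_zv (in_Pc _) ltac:(rewrite d_zv_Pc; lra)) as [A1 A2].
    split; auto. apply A2. apply d_zv_Pc.
  - destruct j as [|[|[|j]]]; try lia. simpl Bc.
    replace (S (S (S i)) - 3)%nat with i by lia. replace (S (S (S j)) - 3)%nat with j by lia.
    assert (Hfi : (f i < 6)%nat) by (apply Hf1; lia). assert (Hfj : (f j < 6)%nat) by (apply Hf1; lia).
    assert (Hne : f i <> f j) by (intros E; apply Hf2 in E; lia).
    pose proof (hex_le _ _ Hfi Hfj Hne).
    destruct (tBB (Pc (f i)) (Pc (f j)) (in_Pc _) (in_Pc _) ltac:(rewrite d_Pc; lra)) as [A1 A2].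
    split; auto. rewrite A2, d_Pc. rewrite <- (hex_C6 _ _ Hfi Hfj).
    split; [intros E; right; right; lra| intros [E|[E|E]]; [lia|lia|lra]].
Qed.

Lemma valid_Bc i : (i < 9)%nat -> valid_ball 3 (Bc i).
Proof.
  intros Hi. destruct i as [|[|[|i]]]; simpl.
  - split. apply in_ez. exists 2%nat. split. lia. unfold ez. simpl. lra.
  - split. apply in_mez. exists 2%nat. split. lia. unfold mez. simpl. lra.
  - split. apply in_zv. lra.
  - split. apply in_Pc. lra.
Qed.

Lemma construct : ball_packable 3 (3 + 6) (join_K 3 G).
Proof.
  exists Bc. split; [split|].
  - apply valid_Bc.
  - intros i j Hi Hj Hij. destruct (proj1 (Nat.lt_gt_cases i j) Hij) as [H|H].
    + apply (good_lt i j H Hj).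
    + apply Disjoint_sym, (good_lt j i H Hi).
  - intros i j Hi Hj Hij.
    assert (E : join_K 3 G i j <-> Tc i j).
    { unfold join_K, Tc. destruct (Nat.lt_ge_cases i 3); [tauto|]. destruct (Nat.lt_ge_cases j 3); [tauto|].
      rewrite Hf3 by lia. tauto. }
    rewrite E.
    destruct (proj1 (Nat.lt_gt_cases i j) Hij) as [H|H].
    + symmetry. apply (good_lt i j H Hj).
    + assert (Tc i j <-> Tc j i) by (unfold Tc; split; intros [|[|]]; auto; right; right; unfold C6 in *; tauto).
      rewrite H0. destruct (good_lt j i H Hi) as [_ T]. rewrite <- T. split; apply tangent_sym.
Qed.
End Constr.

Close Scope R_scope.
Theorem corollary3p2 :
  (forall d : nat, (d = 3 \/ d = 4)%nat ->
     forall G : nat -> nat -> Prop, simple_graph 6 G ->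
       (ball_packable d (d + 6) (join_K d G) <-> (d = 3%nat /\ graph_iso 6 G C6))) /\
  (forall d : nat, (5 <= d)%nat ->
     forall G : nat -> nat -> Prop, simple_graph 5 G ->
       ~ ball_packable d (d + 5) (join_K d G)).
Proof.
  split.
  - intros d [-> | ->] G HS; split.
    + intros H. split; auto. apply d3_iso; auto.
    + intros [_ [f [Hf1 [Hf2 Hf3]]]]. apply (construct G f); auto.
    + intros H. exfalso. apply (no_d4 G H).
    + intros [H _]. discriminate.
  - intros d Hd G _. apply no_d5; auto.
Qed.
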